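(* Let $\ell>0$ and let $\xi:(\tau_{\min},\tau_{\max})\to\mathbb{R}^4$ be a worldline whose image is contained in a two-dimensional timelike plane $P$ of Minkowski spacetime. Then for every $\tau_0\in(\tau_{\min},\tau_{\max})$, in an inertial coordinate system (obtained from the original by an orthochronous Lorentz transformation) in which $\dot\xi^a(\tau_0)=\delta^a_0$, and for every $\sigma\in\{1,2,3\}$, the integral $$\int_0^\infty \frac{\big(\tanh\psi(\zeta,\xi(\tau_0))\,\mu^\sigma(\zeta,\xi(\tau_0))-\tanh\chi(\zeta,\xi(\tau_0))\,\nu^\sigma(\zeta,\xi(\tau_0))\big)\,J_2(\zeta/\ell)}{\Delta(\zeta,\xi(\tau_0))\,\zeta}\,d\zeta$$ is absolutely convergent.
   Context: Minkowski spacetime is $\mathbb{R}^4$ with inertial coordinates $(x^0,\dots,x^3)$ and metric $\eta_{ab}=\mathrm{diag}(-1,1,1,1)$ ($c=1$); spatial indices $\rho,\sigma,\kappa\in\{1,2,3\}$ are raised/lowered with $\delta_{\rho\sigma}$. $J_2$ is the Bessel function of the first kind of order 2. A worldline is an inextendible, future-oriented, timelike $C^\infty$ curve $\xi(\tau)$, $\tau\in(\tau_{\min},\tau_{\max})$ ($\tau_{\min}\in\mathbb{R}\cup\{-\infty\}$, $\tau_{\max}\in\mathbb{R}\cup\{+\infty\}$), parametrized by proper time: $\eta_{ab}\dot\xi^a\dot\xi^b=-1$. For events with $y$ in the chronological past of $x$ (i.e. $x-y$ timelike, future-pointing), $D(x-y)=\sqrt{-\eta_{ab}(x^a-y^a)(x^b-y^b)}$.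 For $x=\xi(\tau_0)$ and $\zeta\in(0,\infty)$, $\varpi(\zeta,x)$ is the unique $\tau\in(\tau_{\min},\tau_0)$ with $D(x-\xi(\tau))=\zeta$ (the map $\tau\mapsto D(x-\xi(\tau))$ is a strictly decreasing bijection from $(\tau_{\min},\tau_0)$ onto $(0,\infty)$). Define functions $\chi,\psi$ and spatial unit vectors $\nu,\mu$ (Euclidean norm 1) by $\dot\xi^a(\varpi(\zeta,x))=\cosh\chi(\zeta,x)\,\delta^a_0+\sinh\chi(\zeta,x)\,\nu^\rho(\zeta,x)\,\delta^a_\rho$ and $x^a-\xi^a(\varpi(\zeta,x))=\zeta\big(\cosh\psi(\zeta,x)\,\delta^a_0+\sinh\psi(\zeta,x)\,\mu^\rho(\zeta,x)\,\delta^a_\rho\big)$, and set $\Delta(\zeta,x)=1-\tanh\psi(\zeta,x)\tanh\chi(\zeta,x)\,\mu^\kappa(\zeta,x)\nu_\kappa(\zeta,x)$. *)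

(* Defs.v *)
From Stdlib Require Import Reals Lra ClassicalEpsilon Factorial.
From Coquelicot Require Import Coquelicot.
Open Scope R_scope.

(** Vectors of R^4: functions nat -> R, of which only the components
    0,1,2,3 are ever used (0 = time, 1..3 = space). *)
Definition V4 := nat -> R.

Definition mink (u v : V4) : R :=
  - u 0%nat * v 0%nat + u 1%nat * v 1%nat + u 2%nat * v 2%nat + u 3%nat * v 3%nat.

Definition sdot (u v : V4) : R :=
  u 1%nat * v 1%nat + u 2%nat * v 2%nat + u 3%nat * v 3%nat.

Definition Dist (y : V4) : R := sqrt (- mink y y).

Definition vsub (x y : V4) : V4 := fun a => x a - y a.

Definition vel (xi : R -> V4) (tau : R) : V4 :=
  fun a => Derive (fun t => xi t a) tau.

Definition in_interval (tmin tmax : Rbar) (t : R) : Prop :=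
  Rbar_lt tmin (Finite t) /\ Rbar_lt (Finite t) tmax.

Definition worldline (xi : R -> V4) (tmin tmax : Rbar) : Prop :=
  tmin <> p_infty /\ tmax <> m_infty /\ Rbar_lt tmin tmax /\
  (forall (a n : nat) (t : R), (a < 4)%nat -> in_interval tmin tmax t ->
      ex_derive_n (fun s => xi s a) n t) /\
  (forall t, in_interval tmin tmax t -> mink (vel xi t) (vel xi t) = -1) /\
  (forall t, in_interval tmin tmax t -> 0 < vel xi t 0%nat) /\
  (* inextendible: no endpoint limit exists at a finite endpoint *)
  (forall m : R, tmin = Finite m ->
      ~ exists p : V4, forall a, (a < 4)%nat ->
          filterlim (fun s => xi s a) (at_right m) (locally (p a))) /\
  (forall M : R, tmax = Finite M ->
      ~ exists p : V4, forall a, (a < 4)%nat ->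
          filterlim (fun s => xi s a) (at_left M) (locally (p a))).

(** The image of xi (on its interval) lies in a two-dimensional timelike
    (affine) plane P = p + span(u, v), with u, v linearly independent and
    span(u, v) containing a timelike vector. *)
Definition in_timelike_plane (xi : R -> V4) (tmin tmax : Rbar) : Prop :=
  exists p u v : V4,
    (forall s t : R, (forall a, (a < 4)%nat -> s * u a + t * v a = 0) ->
        s = 0 /\ t = 0) /\
    (exists s t : R, mink (fun a => s * u a + t * v a)
                          (fun a => s * u a + t * v a) < 0) /\
    (forall tau, in_interval tmin tmax tau ->
       exists s t : R, forall a, (a < 4)%nat -> xi tau a = p a + s * u a + t * v a).

Definition lapply (L : nat -> nat -> R) (x : V4) : V4 :=
  fun a => L a 0%nat * x 0%nat + L a 1%nat * x 1%nat + L a 2%nat * x 2%nat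
           + L a 3%nat * x 3%nat.

Definition orthochronous_lorentz (L : nat -> nat -> R) : Prop :=
  (forall x y : V4, mink (lapply L x) (lapply L y) = mink x y) /\
  0 < L 0%nat 0%nat.

(** varpi(zeta, xi(tau0)): the unique tau in (tmin, tau0) with
    D(xi(tau0) - xi(tau)) = zeta (chosen by Hilbert's epsilon; uniqueness
    and existence follow from the worldline hypotheses). *)
Definition varpi (xi : R -> V4) (tmin : Rbar) (tau0 zeta : R) : R :=
  epsilon (inhabits 0)
    (fun tau => Rbar_lt tmin (Finite tau) /\ tau < tau0 /\
                Dist (vsub (xi tau0) (xi tau)) = zeta).

Definition acosh (y : R) : R := ln (y + sqrt (y * y - 1)).

(** Unit spatial vector e_1, used as the (irrelevant) value of nu / mu when
    the corresponding rapidity vanishes. *)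
Definition e1 : V4 := fun a => if Nat.eqb a 1 then 1 else 0.

(** chi, nu from  xi-dot(varpi) = cosh chi e_0 + sinh chi nu  (chi >= 0). *)
Definition chi_ (xi : R -> V4) tmin tau0 zeta : R :=
  acosh (vel xi (varpi xi tmin tau0 zeta) 0%nat).

Definition nu_ (xi : R -> V4) tmin tau0 zeta : V4 :=
  let c := chi_ xi tmin tau0 zeta in
  if Req_EM_T (sinh c) 0 then e1
  else fun a => vel xi (varpi xi tmin tau0 zeta) a / sinh c.

(** psi, mu from  x - xi(varpi) = zeta (cosh psi e_0 + sinh psi mu)
    (psi >= 0), where x = xi(tau0). *)
Definition psi_ (xi : R -> V4) tmin tau0 zeta : R :=
  acosh (vsub (xi tau0) (xi (varpi xi tmin tau0 zeta)) 0%nat / zeta).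

Definition mu_ (xi : R -> V4) tmin tau0 zeta : V4 :=
  let p := psi_ xi tmin tau0 zeta in
  if Req_EM_T (sinh p) 0 then e1
  else fun a => vsub (xi tau0) (xi (varpi xi tmin tau0 zeta)) a / (zeta * sinh p).

Definition Delta_ (xi : R -> V4) tmin tau0 zeta : R :=
  1 - tanh (psi_ xi tmin tau0 zeta) * tanh (chi_ xi tmin tau0 zeta)
      * sdot (mu_ xi tmin tau0 zeta) (nu_ xi tmin tau0 zeta).

Definition J2 (x : R) : R :=
  Series (fun k : nat => (-1) ^ k / (INR (fact k) * INR (fact (k + 2)))
                         * (x / 2) ^ (2 * k + 2)).

Definition integrand (l : R) (xi : R -> V4) tmin tau0 (sigma : nat) (zeta : R) : R :=
  (tanh (psi_ xi tmin tau0 zeta) * mu_ xi tmin tau0 zeta sigma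
   - tanh (chi_ xi tmin tau0 zeta) * nu_ xi tmin tau0 zeta sigma)
  * J2 (zeta / l) / (Delta_ xi tmin tau0 zeta * zeta).

Definition abs_conv_0_infty (f : R -> R) : Prop :=
  ex_RInt_gen (fun z => Rabs (f z)) (at_right 0) (Rbar_locally p_infty).

(* Main.v *)
Require Import Defs.
From Stdlib Require Import Reals Lra Lia Psatz Factorial Classical ClassicalEpsilon.
From Coquelicot Require Import Coquelicot.
Open Scope R_scope.

Definition cJ (k:nat) : R := (-1)^k / (INR (fact k) * INR (fact (k+2))).
Definition P0 := PSeries cJ.
Definition P1 := PSeries (PS_derive cJ).
Definition P2 := PSeries (PS_derive (PS_derive cJ)).

Lemma INR_fact_pos n : 0 < INR (fact n).
Proof. apply lt_0_INR, lt_O_fact. Qed.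

Lemma cJ_radius : CV_radius cJ = p_infty.
Proof.
  apply CV_radius_infinite_DAlembert.
  - intro n; unfold cJ. pose proof (INR_fact_pos n); pose proof (INR_fact_pos (n+2)).
    apply Rmult_integral_contrapositive; split.
    + apply pow_nonzero; lra.
    + apply Rinv_neq_0_compat. apply Rmult_integral_contrapositive; split; lra.
  - apply is_lim_seq_ext with (fun n => / (INR (S n) * INR (S (n+2)))).
    + intro n. unfold cJ. replace (S n + 2)%nat with (S (n+2)) by lia.
      rewrite !fact_simpl, !mult_INR. simpl pow.
      pose proof (INR_fact_pos n); pose proof (INR_fact_pos (n+2)).
      assert (0 < INR (S n)) by (apply lt_0_INR; lia).
      assert (0 < INR (S (n+2))) by (apply lt_0_INR; lia).
      assert ((-1)^n <> 0).
      { intro Hn. pose proof (pow_1_abs n) as Ha. rewrite Hn, Rabs_R0 in Ha; lra. }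
      replace (-1 * (-1) ^ n / (INR (S n) * INR (fact n) * (INR (S (n + 2)) * INR (fact (n + 2)))) /
   ((-1) ^ n / (INR (fact n) * INR (fact (n + 2))))) with (- / (INR (S n) * INR (S (n + 2)))).
      2:{ field. repeat split; lra. }
      rewrite Rabs_Ropp, Rabs_pos_eq; [reflexivity|].
      left; apply Rinv_0_lt_compat, Rmult_lt_0_compat; lra.
    + change (is_lim_seq (fun n : nat => / (INR (S n) * INR (S (n + 2)))) (Rbar_inv p_infty)).
      apply is_lim_seq_inv; [| discriminate].
      apply is_lim_seq_le_p_loc with (fun n => INR n).
      * exists 0%nat. intros n _. rewrite S_INR, S_INR, plus_INR.
        pose proof (pos_INR n). simpl. nra.
      * apply is_lim_seq_INR.
Qed.

Lemma rad_any x : Rbar_lt (Rabs x) (CV_radius cJ).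
Proof. rewrite cJ_radius. exact I. Qed.
Lemma rad_any1 x : Rbar_lt (Rabs x) (CV_radius (PS_derive cJ)).
Proof. rewrite CV_radius_derive, cJ_radius. exact I. Qed.
Lemma rad_any2 x : Rbar_lt (Rabs x) (CV_radius (PS_derive (PS_derive cJ))).
Proof. rewrite !CV_radius_derive, cJ_radius. exact I. Qed.

Lemma P0_der z : is_derive P0 z (P1 z).
Proof. apply is_derive_PSeries, rad_any. Qed.
Lemma P1_der z : is_derive P1 z (P2 z).
Proof. apply is_derive_PSeries, rad_any1. Qed.

Lemma P0_cont z : continuous P0 z.
Proof. apply (ex_derive_continuous P0). eexists; apply P0_der. Qed.

Lemma ODE z : z * P2 z + 3 * P1 z + P0 z = 0.
Proof.
  unfold P0, P1, P2.
  rewrite <- PSeries_incr_1.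
  assert (E3 : 3 * PSeries (PS_derive cJ) z = PSeries (PS_scal 3 (PS_derive cJ)) z).
  { rewrite PSeries_scal. reflexivity. }
  rewrite E3.
  rewrite <- PSeries_plus.
  2:{ apply ex_pseries_incr_1, CV_radius_inside, rad_any2. }
  2:{ apply ex_pseries_scal. apply Rmult_comm. apply CV_radius_inside, rad_any1. }
  rewrite <- PSeries_plus.
  2:{ apply ex_pseries_plus. apply ex_pseries_incr_1, CV_radius_inside, rad_any2.
      apply ex_pseries_scal. apply Rmult_comm. apply CV_radius_inside, rad_any1. }
  2:{ apply CV_radius_inside, rad_any. }
  rewrite <- (PSeries_const_0 z).
  apply PSeries_ext. intro n.
  destruct n as [|m].
  - change (0 + 3 * (1 * cJ 1) + cJ 0 = 0). unfold cJ; simpl. field.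
  - change (INR (S m) * (INR (S (S m)) * cJ (S (S m))) + 3 * (INR (S (S m)) * cJ (S (S m))) + cJ (S m) = 0).
    unfold cJ. replace (S (S m) + 2)%nat with (S (S (m+2))) by lia.
    replace (S m + 2)%nat with (S (m+2)) by lia.
    rewrite !fact_simpl, !mult_INR. simpl pow.
    pose proof (INR_fact_pos m); pose proof (INR_fact_pos (m+2)).
    rewrite !S_INR, plus_INR. simpl INR. pose proof (pos_INR m).
    field. repeat split; try lra.
Qed.

Lemma J2_eq x : J2 x = x^2/4 * P0 (x^2/4).
Proof.
  unfold J2, P0, PSeries. rewrite <- Series_scal_l. apply Series_ext. intro k.
  unfold cJ. rewrite pow_add, pow_mult.
  replace ((x/2)^2) with (x^2/4) by field. ring.
Qed.

Definition yJ x := x^2/4 * P0 (x^2/4).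
Definition y1J x := x/2 * P0 (x^2/4) + x^3/8 * P1 (x^2/4).
Definition GJ x := x * (y1J x + yJ x / (2*x))^2 + (x - 15/(4*x)) * yJ x ^2.
Definition HJ x := GJ x * (x^2 / (x^2 - 60)).

Definition y2J x := P0 (x^2/4) * (1/2 - x^2/4) - x^2/8 * P1 (x^2/4).

Lemma yJ_der x : is_derive yJ x (y1J x).
Proof.
  unfold yJ, y1J. auto_derive.
  - eexists; apply P0_der.
  - rewrite (is_derive_unique _ _ _ (P0_der _)).
    replace (x * (x * 1) * / 4) with (x^2/4) by (simpl; field).
    change (R) in x. set (p := P0 (x^2/4)). set (q := P1 (x^2/4)). field.
Qed.

Lemma y1J_der x : is_derive y1J x (y2J x).
Proof.
  unfold y1J, y2J. auto_derive. all: change R in x.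
  - split; [eexists; apply P0_der|split; [eexists; apply P1_der|auto]].
  - rewrite (is_derive_unique _ _ _ (P0_der _)), (is_derive_unique _ _ _ (P1_der _)).
    replace (x * (x * 1) * / 4) with (x^2/4) by (simpl; field).
    pose proof (ODE (x^2/4)) as E.
    set (z := x^2/4) in *.
    replace (x^4) with (16 * z * z) by (unfold z; field).
    assert (Ex : x^2 = 4*z) by (unfold z; field).
    set (p := P0 z) in *. set (q := P1 z) in *. set (r := P2 z) in *.
    simpl in Ex |- *. 
    replace (x * x) with (4*z) by lra.
    nra.
Qed.

Lemma bessel_ode x : x <> 0 -> x^2 * y2J x + x * y1J x + (x^2 - 4) * yJ x = 0.
Proof.
  intro Hx. unfold y2J, y1J, yJ. field.
Qed.

Ltac sides := repeat first [ progress (simpl in *) | split | assumption | (eexists; apply yJ_der) | (eexists; apply y1J_der) | auto ].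

Lemma GJ_der x : 8 <= x -> is_derive GJ x (15/2 * yJ x ^ 2 / x^2).
Proof.
  intro Hx. assert (Hx0 : x <> 0) by lra.
  pose proof (bessel_ode x Hx0) as B.
  unfold GJ. auto_derive.
  - repeat split; try (eexists; apply y1J_der); try (eexists; apply yJ_der); auto.
  - change R in x.
    replace (Derive (fun x0 => yJ x0) x) with (y1J x) by (symmetry; apply is_derive_unique, yJ_der).
    replace (Derive (fun x0 => y1J x0) x) with (y2J x) by (symmetry; apply is_derive_unique, y1J_der).
    assert (E2 : y2J x = - (x * y1J x + (x^2-4) * yJ x) / x^2).
    { field_simplify_eq; [lra|]. simpl; nra. }
    rewrite E2. generalize (yJ x) (y1J x); intros a b.
    field. auto.
Qed.

Lemma HJ_der x : 8 <= x ->
  is_derive HJ x ((x^2/(x^2-60)) * (15/2 * yJ x^2 / x^2) + GJ x * (-120*x/(x^2-60)^2)).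
Proof.
  intro Hx. assert (Hx0 : x <> 0) by lra.
  assert (Hx6 : x^2 - 60 <> 0) by nra.
  unfold HJ. auto_derive.
  - simpl in Hx6. repeat split; try (eexists; apply GJ_der; lra); auto.
  - change R in x.
    replace (Derive (fun x0 => GJ x0) x) with (15/2 * yJ x ^ 2 / x^2) by (symmetry; apply is_derive_unique, GJ_der; lra).
    generalize (yJ x) (GJ x); intros a b.
    field. simpl in Hx6. split; auto.
Qed.

Lemma GJ_lb x : 8 <= x -> x/2 * yJ x ^ 2 <= GJ x.
Proof.
  intro Hx. unfold GJ.
  assert (0 <= x * (y1J x + yJ x / (2 * x)) ^ 2) by (apply Rmult_le_pos; [lra| apply pow2_ge_0]).
  assert (x/2 <= x - 15 / (4 * x)).
  { assert (15/(4*x) <= x/2); [|lra].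
    apply Rmult_le_reg_r with (4*x); [lra|]. field_simplify; nra. }
  pose proof (pow2_ge_0 (yJ x)). nra.
Qed.

Lemma HJ_dec x : 8 <= x -> HJ x <= HJ 8.
Proof.
  intro Hx.
  destruct (MVT_gen HJ 8 x (fun t => (t^2/(t^2-60)) * (15/2 * yJ t^2 / t^2) + GJ t * (-120*t/(t^2-60)^2)))
    as [c [Hc E]].
  - intros t Ht. rewrite Rmin_left in Ht by lra. rewrite Rmax_right in Ht by lra.
    apply HJ_der; lra.
  - intros t Ht. rewrite Rmin_left in Ht by lra. rewrite Rmax_right in Ht by lra.
    apply continuity_pt_filterlim. apply (ex_derive_continuous HJ).
    eexists; apply HJ_der; lra.
  - rewrite Rmin_left in Hc by lra. rewrite Rmax_right in Hc by lra.
    assert (D : (c^2/(c^2-60)) * (15/2 * yJ c^2 / c^2) + GJ c * (-120*c/(c^2-60)^2) <= 0).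
    { pose proof (GJ_lb c (proj1 Hc)) as G. set (a := yJ c) in *. set (g := GJ c) in *.
      assert (Hc6 : 0 < c^2 - 60) by nra.
      assert (Hc0 : 0 < c) by lra.
      replace ((c^2/(c^2-60)) * (15/2 * a^2 / c^2) + g * (-120*c/(c^2-60)^2))
        with (((15/2) * a^2 * (c^2-60) - 120 * c * g) / (c^2-60)^2) by (field; lra).
      apply Rmult_le_0_r.
      - pose proof (pow2_ge_0 a). nra.
      - left; apply Rinv_0_lt_compat; nra. }
    nra.
Qed.

Lemma J2_decay : exists K, 0 <= K /\ forall x, 8 <= x -> Rabs (J2 x) <= sqrt (K / x).
Proof.
  exists (2 * HJ 8). split.
  - unfold HJ. pose proof (GJ_lb 8 (Rle_refl _)). pose proof (pow2_ge_0 (yJ 8)).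
    assert (0 <= GJ 8) by nra. apply Rmult_le_pos; [lra|]. apply Rmult_le_pos; [lra|].
    simpl; lra.
  - intros x Hx. rewrite J2_eq. fold (yJ x).
    rewrite <- sqrt_Rsqr_abs. apply sqrt_le_1_alt.
    pose proof (HJ_dec x Hx). pose proof (GJ_lb x Hx).
    assert (GJ x <= HJ x).
    { unfold HJ. pose proof (pow2_ge_0 (yJ x)).
      assert (0 <= GJ x) by nra.
      assert (1 <= x^2/(x^2-60)).
      { apply Rmult_le_reg_r with (x^2-60); [nra|]. field_simplify; nra. }
      nra. }
    unfold Rsqr. apply Rmult_le_reg_r with x; [lra|].
    field_simplify; [|lra]. simpl in *. nra.
Qed.

Lemma cont_of_cpt f x : continuity_pt f x -> continuous f x.
Proof. intro H. apply continuity_pt_filterlim. exact H. Qed.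

Lemma exRInt_cpt f a b : a <= b -> (forall x, a <= x <= b -> continuity_pt f x) -> ex_RInt f a b.
Proof.
  intros Hab H. apply (ex_RInt_continuous (V:=R_CompleteNormedModule)). intros z Hz.
  rewrite Rmin_left in Hz by lra. rewrite Rmax_right in Hz by lra.
  apply cont_of_cpt, H, Hz.
Qed.

Lemma improper_nonneg (g : R -> R) :
  (forall x, 0 < x -> continuity_pt g x) -> (forall x, 0 < x -> 0 <= g x) ->
  (exists M, forall a b, 0 < a -> a <= b -> RInt g a b <= M) ->
  ex_RInt_gen g (at_right 0) (Rbar_locally p_infty).
Proof.
  intros Hc Hp [M HM].
  assert (Hex : forall a b, 0 < a -> a <= b -> ex_RInt g a b).
  { intros a b Ha Hab. apply exRInt_cpt; auto. intros; apply Hc; lra. }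
  assert (Hge : forall a b, 0 < a -> a <= b -> 0 <= RInt g a b).
  { intros a b Ha Hab. apply RInt_ge_0; auto. intros; apply Hp; lra. }
  assert (Hmono : forall a a' b b', 0 < a' -> a' <= a -> a <= b -> b <= b' -> RInt g a b <= RInt g a' b').
  { intros a a' b b' H1 H2 H3 H4.
    rewrite <- (RInt_Chasles g a' a b') by (apply Hex; lra).
    rewrite <- (RInt_Chasles g a b b') by (apply Hex; lra).
    pose proof (Hge a' a H1 H2). pose proof (Hge b b' ltac:(lra) H4).
    change (plus (RInt g a' a) (plus (RInt g a b) (RInt g b b'))) with
      (RInt g a' a + (RInt g a b + RInt g b b')). lra. }
  set (E := fun r => exists a b, 0 < a <= b /\ r = RInt g a b).
  destruct (completeness E) as [s [Hs1 Hs2]].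
  { exists M. intros r [a [b [Hab ->]]]. apply HM; lra. }
  { exists (RInt g 1 1). exists 1, 1. split; [lra|reflexivity]. }
  exists s.
  intros P [eps HP]. simpl.
  assert (Hr : exists a0 b0, 0 < a0 <= b0 /\ s - eps < RInt g a0 b0).
  { apply NNPP. intro Hn.
    assert (Hb : is_upper_bound E (s - eps)).
    { intros r [a [b [Hab ->]]]. apply Rnot_lt_le. intro Hl. apply Hn. exists a, b. split; auto. }
    pose proof (Hs2 _ Hb). destruct eps; simpl in *; lra. }
  destruct Hr as [a0 [b0 [Hab0 Hlt]]].
  apply Filter_prod with (fun a => 0 < a < a0) (fun b => b0 < b).
  - assert (Ha0 : 0 < a0) by lra.
    exists (mkposreal a0 Ha0). intros y Hy Hy0. split; auto.
    unfold ball in Hy; simpl in Hy. unfold AbsRing_ball in Hy. unfold abs, minus, plus, opp in Hy; simpl in Hy.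
    rewrite Ropp_0, Rplus_0_r, Rabs_pos_eq in Hy by lra. exact Hy.
  - exists b0. auto.
  - intros a b Ha Hb. simpl. exists (RInt g a b). split.
    + apply (RInt_correct (V:=R_CompleteNormedModule)), Hex; lra.
    + apply HP. unfold ball; simpl. unfold AbsRing_ball, abs, minus, plus, opp; simpl.
      assert (RInt g a b <= s) by (apply Hs1; exists a, b; split; [lra|reflexivity]).
      assert (RInt g a0 b0 <= RInt g a b) by (apply Hmono; lra).
      apply Rabs_def1; lra.
Qed.

Lemma cpt_of_exd f x : ex_derive f x -> continuity_pt f x.
Proof. intro H. apply continuity_pt_filterlim. apply (ex_derive_continuous f). exact H. Qed.

Lemma cpt_comp (f g : R -> R) x : continuity_pt f x -> continuity_pt g (f x) -> continuity_pt (fun t => g (f t)) x.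
Proof. intros. apply (continuity_pt_comp f g x); auto. Qed.

Lemma cpt_div (f g : R -> R) x : continuity_pt f x -> continuity_pt g x -> g x <> 0 -> continuity_pt (fun t => f t / g t) x.
Proof. intros. apply (continuity_pt_div f g x); auto. Qed.

Lemma cpt_mult (f g : R -> R) x : continuity_pt f x -> continuity_pt g x -> continuity_pt (fun t => f t * g t) x.
Proof. intros. apply (continuity_pt_mult f g x); auto. Qed.

Lemma cpt_abs x : continuity_pt Rabs x.
Proof. apply Rcontinuity_abs. Qed.

Lemma J2_cpt x : continuity_pt J2 x.
Proof.
  apply continuity_pt_ext with (fun x => x^2/4 * P0 (x^2/4)).
  { intro; symmetry; apply J2_eq. }
  apply cpt_of_exd. auto_derive. eexists; apply P0_der.
Qed.

Definition hJ l z := Rabs (J2 (z/l)) / z.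

Lemma hJ_cpt l z : 0 < l -> 0 < z -> continuity_pt (hJ l) z.
Proof.
  intros Hl Hz. unfold hJ. apply cpt_div; [| apply cpt_of_exd; auto_derive; auto | lra].
  apply cpt_comp with (f := fun t => J2 (t/l)) (g := Rabs); [|apply cpt_abs].
  apply cpt_comp with (f := fun t => t/l); [apply cpt_of_exd; auto_derive; lra | apply J2_cpt].
Qed.

Lemma hJ_nonneg l z : 0 < z -> 0 <= hJ l z.
Proof. intro. unfold hJ. apply Rmult_le_pos; [apply Rabs_pos| left; apply Rinv_0_lt_compat; lra]. Qed.

Lemma h_bound l : 0 < l -> exists M, forall a b, 0 < a -> a <= b -> RInt (hJ l) a b <= M.
Proof.
  intro Hl.
  set (p := fun z => Rabs (z * P0 (z^2/(4*l^2))) / (4*l^2)).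
  assert (Hp : forall z, continuity_pt p z).
  { intro z. unfold p. apply cpt_div; [| apply cpt_of_exd; auto_derive; auto | nra].
    apply cpt_comp with (f := fun t => t * P0 (t^2/(4*l^2))) (g := Rabs); [|apply cpt_abs].
    apply cpt_of_exd. auto_derive. eexists; apply P0_der. }
  assert (Hhp : forall z, 0 < z -> hJ l z = p z).
  { intros z Hz. unfold hJ, p. rewrite J2_eq.
    replace ((z/l)^2/4) with (z^2/(4*l^2)) by (field; lra).
    replace ((z/l)^2/4 * P0 (z^2/(4*l^2))) with (z * P0 (z^2/(4*l^2)) * (z / (4*l^2))) by (field; lra).
    rewrite !Rabs_mult.
    rewrite (Rabs_pos_eq (z^2/(4*l^2))) by (apply Rmult_le_pos; [nra| left; apply Rinv_0_lt_compat; nra]).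
    rewrite (Rabs_pos_eq z) by lra.
    field. split; lra. }
  assert (Hp0 : forall z, 0 <= p z).
  { intro z. unfold p. apply Rmult_le_pos; [apply Rabs_pos| left; apply Rinv_0_lt_compat; nra]. }
  destruct J2_decay as [K [HK HJ]].
  set (c := 8 * l). assert (Hc : 0 < c) by (unfold c; lra).
  set (C := sqrt (K * l)).
  assert (HC : 0 <= C) by apply sqrt_pos.
  assert (Hex : forall a b, 0 < a -> a <= b -> ex_RInt (hJ l) a b).
  { intros a b Ha Hab. apply exRInt_cpt; auto. intros; apply hJ_cpt; lra. }
  assert (L1 : forall a b, 0 < a -> a <= b -> b <= c -> RInt (hJ l) a b <= RInt p 0 c).
  { intros a b Ha Hab Hbc.
    assert (ExP : forall u v, u <= v -> ex_RInt p u v) by (intros; apply exRInt_cpt; auto).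
    rewrite (RInt_ext (hJ l) p).
    2:{ intros x Hx. rewrite Rmin_left in Hx by lra. apply Hhp; lra. }
    rewrite <- (RInt_Chasles p 0 a c) by (apply ExP; lra).
    rewrite <- (RInt_Chasles p a b c) by (apply ExP; lra).
    assert (0 <= RInt p 0 a) by (apply RInt_ge_0; [lra | apply ExP; lra | intros; apply Hp0]).
    assert (0 <= RInt p b c) by (apply RInt_ge_0; [lra | apply ExP; lra | intros; apply Hp0]).
    change (RInt p a b <= RInt p 0 a + (RInt p a b + RInt p b c)). lra. }
  assert (L2 : forall a b, c <= a -> a <= b -> RInt (hJ l) a b <= 2 * C / sqrt c).
  { intros a b Ha Hab.
    set (q := fun z => C / (z * sqrt z)).
    set (F := fun z => - 2 * C / sqrt z).
    assert (IQ : is_RInt q a b (F b - F a)).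
    { apply (is_RInt_derive (V:=R_CompleteNormedModule) F q).
      - intros x Hx. rewrite Rmin_left in Hx by lra. rewrite Rmax_right in Hx by lra.
        assert (0 < sqrt x) by (apply sqrt_lt_R0; lra).
        pose proof (sqrt_sqrt x ltac:(lra)).
        unfold F, q. auto_derive.
        + repeat split; lra.
        + replace (x * sqrt x) with (sqrt x * sqrt x * sqrt x) by (rewrite H0; ring).
          field. lra.
      - intros x Hx. rewrite Rmin_left in Hx by lra. rewrite Rmax_right in Hx by lra.
        apply (ex_derive_continuous q). unfold q. auto_derive.
        assert (0 < sqrt x) by (apply sqrt_lt_R0; lra). split; [lra|]. nra. }
    assert (RInt (hJ l) a b <= RInt q a b).
    { apply RInt_le; auto.
      - apply Hex; lra.
      - eexists; exact IQ.
      - intros x Hx. unfold hJ, q.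
        assert (Hx0 : 0 < x) by lra.
        assert (0 < sqrt x) by (apply sqrt_lt_R0; lra).
        assert (Rabs (J2 (x/l)) <= C / sqrt x).
        { eapply Rle_trans. apply HJ. apply Rmult_le_reg_r with l; [lra|]. unfold c in Ha.
          field_simplify; lra.
          unfold C. rewrite <- sqrt_div_alt by lra. right. f_equal. field. split; lra. }
        unfold Rdiv. rewrite Rinv_mult. 
        replace (C * (/ x * / sqrt x)) with (C / sqrt x * / x) by (field; split; lra).
        apply Rmult_le_compat_r; [left; apply Rinv_0_lt_compat; lra| exact H0]. }
    rewrite (is_RInt_unique _ _ _ _ IQ) in H.
    unfold F in H.
    assert (0 < sqrt c) by (apply sqrt_lt_R0; lra).
    assert (sqrt c <= sqrt a) by (apply sqrt_le_1_alt; lra).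
    assert (0 < sqrt b) by (apply sqrt_lt_R0; lra).
    assert (2 * C / sqrt a <= 2 * C / sqrt c).
    { unfold Rdiv. apply Rmult_le_compat_l; [lra|]. apply Rinv_le_contravar; lra. }
    assert (0 <= 2 * C / sqrt b) by (apply Rmult_le_pos; [lra| left; apply Rinv_0_lt_compat; lra]).
    replace (-2 * C / sqrt b - -2 * C / sqrt a) with (2 * C / sqrt a - 2 * C / sqrt b) in H by (field; lra).
    lra. }
  exists (RInt p 0 c + 2 * C / sqrt c).
  assert (0 <= RInt p 0 c) by (apply RInt_ge_0; [lra| apply exRInt_cpt; auto; lra | auto]).
  assert (0 <= 2 * C / sqrt c).
  { apply Rmult_le_pos; [lra|]. left; apply Rinv_0_lt_compat, sqrt_lt_R0; lra. }
  intros a b Ha Hab.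
  destruct (Rle_dec b c) as [Hb|Hb].
  - pose proof (L1 a b Ha Hab Hb). lra.
  - destruct (Rle_dec c a) as [Ha'|Ha'].
    + pose proof (L2 a b Ha' Hab). lra.
    + rewrite <- (RInt_Chasles (hJ l) a c b) by (apply Hex; lra).
      pose proof (L1 a c Ha ltac:(lra) (Rle_refl _)).
      pose proof (L2 c b (Rle_refl _) ltac:(lra)).
      change (RInt (hJ l) a c + RInt (hJ l) c b <= RInt p 0 c + 2 * C / sqrt c). lra.
Qed.

Lemma lim_plus {T} (F : (T -> Prop) -> Prop) {FF : Filter F} (f g : T -> R) a b :
  filterlim f F (locally a) -> filterlim g F (locally b) ->
  filterlim (fun t => f t + g t) F (locally (a + b)).
Proof. intros Hf Hg. eapply filterlim_comp_2; [exact Hf | exact Hg | apply (filterlim_plus a b)]. Qed.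

Lemma lim_scal {T} (F : (T -> Prop) -> Prop) {FF : Filter F} (f : T -> R) a k :
  filterlim f F (locally a) -> filterlim (fun t => k * f t) F (locally (k * a)).
Proof. intros Hf. eapply filterlim_comp; [exact Hf | apply (filterlim_scal_r k a)]. Qed.

Lemma lim_const {T} (F : (T -> Prop) -> Prop) {FF : Filter F} (a : R) :
  filterlim (fun _ => a) F (locally a).
Proof. apply filterlim_const. Qed.

Lemma in_between tmin tmax a b t : in_interval tmin tmax a -> in_interval tmin tmax b ->
  a <= t <= b -> in_interval tmin tmax t.
Proof.
  unfold in_interval. destruct tmin, tmax; simpl; intros; lra.
Qed.

Lemma locally_in tmin tmax t : in_interval tmin tmax t -> locally t (in_interval tmin tmax).
Proof.
  intros [H1 H2].
  assert (Hd : exists d, 0 < d /\ forall s, Rabs (s - t) < d -> in_interval tmin tmax s).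
  { unfold in_interval. destruct tmin as [m| |], tmax as [M| |]; simpl in *; try contradiction.
    - exists (Rmin (t - m) (M - t)). split. apply Rmin_pos; lra.
      intros s Hs. apply Rabs_def2 in Hs. pose proof (Rmin_l (t-m) (M-t)). pose proof (Rmin_r (t-m) (M-t)). lra.
    - exists (t - m). split. lra. intros s Hs. apply Rabs_def2 in Hs. lra.
    - exists (M - t). split. lra. intros s Hs. apply Rabs_def2 in Hs. lra.
    - exists 1. split. lra. auto. }
  destruct Hd as [d [Hd H]]. exists (mkposreal d Hd). intros s Hs. apply H. exact Hs.
Qed.

Record good (y : R -> V4) (tmin tmax : Rbar) (tau0 : R) (n : V4) : Prop := {
  g_in : in_interval tmin tmax tau0;
  g_der : forall t a, (a < 4)%nat -> in_interval tmin tmax t -> ex_derive (fun s => y s a) t;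
  g_vc : forall t a, (a < 4)%nat -> in_interval tmin tmax t -> continuity_pt (fun s => vel y s a) t;
  g_mink : forall t, in_interval tmin tmax t -> mink (vel y t) (vel y t) = -1;
  g_v0 : forall a, (a < 4)%nat -> vel y tau0 a = if Nat.eqb a 0 then 1 else 0;
  g_n : n 1%nat * n 1%nat + n 2%nat * n 2%nat + n 3%nat * n 3%nat = 1;
  g_pl : forall t s, in_interval tmin tmax t -> (1 <= s <= 3)%nat ->
     y t s = y tau0 s + sdot (vsub (y t) (y tau0)) n * n s;
  g_inext : forall m, tmin = Finite m ->
     ~ exists p : V4, forall a, (a < 4)%nat -> filterlim (fun s => y s a) (at_right m) (locally (p a))
}.

Definition V0f (y : R -> V4) t := vel y t 0%nat.
Definition V1f (y : R -> V4) (n : V4) t := sdot (vel y t) n.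
Definition Tf (y : R -> V4) tau0 t := y tau0 0%nat - y t 0%nat.
Definition Xf (y : R -> V4) tau0 (n : V4) t := sdot (vsub (y tau0) (y t)) n.
Definition Af y tau0 n t := Tf y tau0 t - Xf y tau0 n t.
Definition Bf y tau0 n t := Tf y tau0 t + Xf y tau0 n t.
Definition Qf y tau0 n t := Af y tau0 n t * Bf y tau0 n t.

Lemma Derive_vel (y : R -> V4) t a : Derive (fun s => y s a) t = vel y t a.
Proof. reflexivity. Qed.

Lemma der_comb (y : R -> V4) t (c : nat -> R) k0 :
  (forall a, (a < 4)%nat -> ex_derive (fun s => y s a) t) ->
  is_derive (fun s => k0 + c 0%nat * y s 0%nat + c 1%nat * y s 1%nat + c 2%nat * y s 2%nat + c 3%nat * y s 3%nat) t
    (c 0%nat * vel y t 0%nat + c 1%nat * vel y t 1%nat + c 2%nat * vel y t 2%nat + c 3%nat * vel y t 3%nat).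
Proof.
  intro H.
  set (f0 := fun s => y s 0%nat). set (f1 := fun s => y s 1%nat).
  set (f2 := fun s => y s 2%nat). set (f3 := fun s => y s 3%nat).
  change (is_derive (fun s => k0 + c 0%nat * f0 s + c 1%nat * f1 s + c 2%nat * f2 s + c 3%nat * f3 s) t
    (c 0%nat * Derive f0 t + c 1%nat * Derive f1 t + c 2%nat * Derive f2 t + c 3%nat * Derive f3 t)).
  auto_derive.
  - repeat split; [apply (H 0%nat)|apply (H 1%nat)|apply (H 2%nat)|apply (H 3%nat)]; lia.
  - change R in t. unfold f0, f1, f2, f3. cbv beta. ring.
Qed.

Ltac comb y t c k0 H :=
  let E := fresh in
  pose proof (der_comb y t c k0 H) as E;
  eapply is_derive_ext; [| exact E]; intro; simpl; ring.

Lemma vel_pl y tmin tmax tau0 n (G : good y tmin tmax tau0 n) t s :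
  in_interval tmin tmax t -> (1 <= s <= 3)%nat -> vel y t s = V1f y n t * n s.
Proof.
  intros Ht Hs. unfold vel at 1.
  rewrite (Derive_ext_loc _ (fun u => y tau0 s + sdot (vsub (y u) (y tau0)) n * n s)).
  2:{ generalize (locally_in _ _ _ Ht). apply filter_imp. intros u Hu. apply (g_pl _ _ _ _ _ G); auto. }
  apply is_derive_unique.
  assert (H : forall a, (a < 4)%nat -> ex_derive (fun s => y s a) t) by (intros; apply (g_der _ _ _ _ _ G); auto).
  set (c := fun k => match k with 0%nat => 0 | 1%nat => n 1%nat * n s | 2%nat => n 2%nat * n s | _ => n 3%nat * n s end).
  replace (V1f y n t * n s) with (c 0%nat * vel y t 0%nat + c 1%nat * vel y t 1%nat + c 2%nat * vel y t 2%nat + c 3%nat * vel y t 3%nat)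
    by (unfold c, V1f, sdot; ring).
  eapply is_derive_ext; [| exact (der_comb y t c (y tau0 s - (y tau0 1%nat * n 1%nat + y tau0 2%nat * n 2%nat + y tau0 3%nat * n 3%nat) * n s) H)].
  intro u. unfold c, sdot, vsub. simpl. ring.
Qed.

Lemma y_pl y tmin tmax tau0 n (G : good y tmin tmax tau0 n) t s :
  in_interval tmin tmax t -> (1 <= s <= 3)%nat -> y tau0 s - y t s = Xf y tau0 n t * n s.
Proof.
  intros Ht Hs.
  pose proof (g_n _ _ _ _ _ G) as Hn.
  assert (E : forall k, (1 <= k <= 3)%nat -> y t k = y tau0 k + sdot (vsub (y t) (y tau0)) n * n k).
  { intros; apply (g_pl _ _ _ _ _ G); auto. }
  set (lam := sdot (vsub (y t) (y tau0)) n) in *. clearbody lam.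
  unfold Xf, sdot, vsub.
  rewrite (E s), (E 1%nat), (E 2%nat), (E 3%nat) by lia.
  replace ((y tau0 1%nat - (y tau0 1%nat + lam * n 1%nat)) * n 1%nat +
   (y tau0 2%nat - (y tau0 2%nat + lam * n 2%nat)) * n 2%nat +
   (y tau0 3%nat - (y tau0 3%nat + lam * n 3%nat)) * n 3%nat) with (- lam * (n 1%nat * n 1%nat + n 2%nat * n 2%nat + n 3%nat * n 3%nat)) by ring.
  rewrite Hn. ring.
Qed.

Lemma mink_V y tmin tmax tau0 n (G : good y tmin tmax tau0 n) t :
  in_interval tmin tmax t -> V0f y t * V0f y t - V1f y n t * V1f y n t = 1.
Proof.
  intro Ht. pose proof (g_mink _ _ _ _ _ G t Ht) as M. pose proof (g_n _ _ _ _ _ G) as Hn.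
  unfold mink in M.
  rewrite (vel_pl _ _ _ _ _ G t 1), (vel_pl _ _ _ _ _ G t 2), (vel_pl _ _ _ _ _ G t 3) in M by (auto; lia).
  unfold V0f. set (w := V1f y n t) in *.
  assert (E : w * n 1%nat * (w * n 1%nat) + w * n 2%nat * (w * n 2%nat) + w * n 3%nat * (w * n 3%nat)
    = w * w * (n 1%nat * n 1%nat + n 2%nat * n 2%nat + n 3%nat * n 3%nat)) by ring.
  rewrite Hn in E. lra.
Qed.

Lemma V0_cpt y tmin tmax tau0 n (G : good y tmin tmax tau0 n) t :
  in_interval tmin tmax t -> continuity_pt (V0f y) t.
Proof. intro Ht. apply (g_vc _ _ _ _ _ G); auto; lia. Qed.

Lemma V0_tau0 y tmin tmax tau0 n (G : good y tmin tmax tau0 n) : V0f y tau0 = 1.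
Proof. unfold V0f. rewrite (g_v0 _ _ _ _ _ G) by lia. reflexivity. Qed.

Lemma V0_pos y tmin tmax tau0 n (G : good y tmin tmax tau0 n) t :
  in_interval tmin tmax t -> t <= tau0 -> 0 < V0f y t.
Proof.
  intros Ht Hle. pose proof (mink_V _ _ _ _ _ G t Ht) as M.
  destruct (Rlt_or_le 0 (V0f y t)) as [H|H]; auto. exfalso.
  assert (Hneg : V0f y t < 0) by nra.
  destruct (Req_dec t tau0) as [->|Hne].
  { rewrite (V0_tau0 _ _ _ _ _ G) in Hneg. lra. }
  destruct (Ranalysis5.IVT_interv (V0f y) t tau0) as [z [Hz Hz0]].
  - intros a Ha. apply (V0_cpt _ _ _ _ _ G). apply in_between with t tau0; auto. apply (g_in _ _ _ _ _ G).
  - lra.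
  - exact Hneg.
  - rewrite (V0_tau0 _ _ _ _ _ G). lra.
  - pose proof (mink_V _ _ _ _ _ G z (in_between _ _ _ _ _ Ht (g_in _ _ _ _ _ G) Hz)). rewrite Hz0 in H0. nra.
Qed.

Lemma A_der y tmin tmax tau0 n (G : good y tmin tmax tau0 n) t :
  in_interval tmin tmax t -> is_derive (Af y tau0 n) t (-(V0f y t - V1f y n t)).
Proof.
  intro Ht.
  assert (H : forall a, (a < 4)%nat -> ex_derive (fun s => y s a) t) by (intros; apply (g_der _ _ _ _ _ G); auto).
  replace (-(V0f y t - V1f y n t)) with ((fun k => match k with 0%nat => -1 | 1%nat => n 1%nat | 2%nat => n 2%nat | _ => n 3%nat end) 0%nat * vel y t 0%nat + (fun k => match k with 0%nat => -1 | 1%nat => n 1%nat | 2%nat => n 2%nat | _ => n 3%nat end) 1%nat * vel y t 1%nat + (fun k => match k with 0%nat => -1 | 1%nat => n 1%nat | 2%nat => n 2%nat | _ => n 3%nat end) 2%nat * vel y t 2%nat + (fun k => match k with 0%nat => -1 | 1%nat => n 1%nat | 2%nat => n 2%nat | _ => n 3%nat end) 3%nat * vel y t 3%nat)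
    by (unfold V0f, V1f, sdot; simpl; ring).
  eapply is_derive_ext; [| exact (der_comb y t (fun k => match k with 0%nat => -1 | 1%nat => n 1%nat | 2%nat => n 2%nat | _ => n 3%nat end) (y tau0 0%nat - (y tau0 1%nat * n 1%nat + y tau0 2%nat * n 2%nat + y tau0 3%nat * n 3%nat)) H)].
  intro u. unfold Af, Tf, Xf, sdot, vsub. simpl. ring.
Qed.

Lemma B_der y tmin tmax tau0 n (G : good y tmin tmax tau0 n) t :
  in_interval tmin tmax t -> is_derive (Bf y tau0 n) t (-(V0f y t + V1f y n t)).
Proof.
  intro Ht.
  assert (H : forall a, (a < 4)%nat -> ex_derive (fun s => y s a) t) by (intros; apply (g_der _ _ _ _ _ G); auto).
  replace (-(V0f y t + V1f y n t)) with ((fun k => match k with 0%nat => -1 | 1%nat => - n 1%nat | 2%nat => - n 2%nat | _ => - n 3%nat end) 0%nat * vel y t 0%nat + (fun k => match k with 0%nat => -1 | 1%nat => - n 1%nat | 2%nat => - n 2%nat | _ => - n 3%nat end) 1%nat * vel y t 1%nat + (fun k => match k with 0%nat => -1 | 1%nat => - n 1%nat | 2%nat => - n 2%nat | _ => - n 3%nat end) 2%nat * vel y t 2%nat + (fun k => match k with 0%nat => -1 | 1%nat => - n 1%nat | 2%nat => - n 2%nat | _ => - n 3%nat end) 3%nat * vel y t 3%nat)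
    by (unfold V0f, V1f, sdot; simpl; ring).
  eapply is_derive_ext; [| exact (der_comb y t (fun k => match k with 0%nat => -1 | 1%nat => - n 1%nat | 2%nat => - n 2%nat | _ => - n 3%nat end) (y tau0 0%nat + (y tau0 1%nat * n 1%nat + y tau0 2%nat * n 2%nat + y tau0 3%nat * n 3%nat)) H)].
  intro u. unfold Bf, Tf, Xf, sdot, vsub. simpl. ring.
Qed.

Lemma T_der y tmin tmax tau0 n (G : good y tmin tmax tau0 n) t :
  in_interval tmin tmax t -> is_derive (Tf y tau0) t (- V0f y t).
Proof.
  intro Ht.
  assert (H : forall a, (a < 4)%nat -> ex_derive (fun s => y s a) t) by (intros; apply (g_der _ _ _ _ _ G); auto).
  set (c := fun k : nat => match k with 0%nat => -1 | _ => 0 end).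
  replace (- V0f y t) with (c 0%nat * vel y t 0%nat + c 1%nat * vel y t 1%nat + c 2%nat * vel y t 2%nat + c 3%nat * vel y t 3%nat)
    by (unfold c, V0f; simpl; ring).
  eapply is_derive_ext; [| exact (der_comb y t c (y tau0 0%nat) H)].
  intro u. unfold c, Tf. simpl. ring.
Qed.

Lemma cpt_of_der f t l : is_derive f t l -> continuity_pt f t.
Proof. intro H. apply cpt_of_exd. eexists; exact H. Qed.

Lemma strict_dec f df t1 t2 :
  t1 < t2 -> (forall x, t1 <= x <= t2 -> is_derive f x (df x)) -> (forall x, t1 <= x <= t2 -> df x < 0) ->
  f t2 < f t1.
Proof.
  intros H12 Hd Hn.
  destruct (MVT_gen f t1 t2 df) as [c [Hc E]].
  - intros x Hx. rewrite Rmin_left in Hx by lra. rewrite Rmax_right in Hx by lra. apply Hd; lra.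
  - intros x Hx. rewrite Rmin_left in Hx by lra. rewrite Rmax_right in Hx by lra.
    apply cpt_of_der with (df x). apply Hd; lra.
  - rewrite Rmin_left in Hc by lra. rewrite Rmax_right in Hc by lra.
    pose proof (Hn c Hc). nra.
Qed.

Lemma VV y tmin tmax tau0 n (G : good y tmin tmax tau0 n) t :
  in_interval tmin tmax t -> t <= tau0 -> V0f y t - V1f y n t > 0 /\ V0f y t + V1f y n t > 0.
Proof.
  intros Ht Hle. pose proof (mink_V _ _ _ _ _ G t Ht). pose proof (V0_pos _ _ _ _ _ G t Ht Hle).
  split; nra.
Qed.

Lemma AB_dec y tmin tmax tau0 n (G : good y tmin tmax tau0 n) t1 t2 :
  in_interval tmin tmax t1 -> t1 < t2 -> t2 <= tau0 ->
  Af y tau0 n t2 < Af y tau0 n t1 /\ Bf y tau0 n t2 < Bf y tau0 n t1.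
Proof.
  intros H1 H12 H2.
  assert (HI : forall x, t1 <= x <= t2 -> in_interval tmin tmax x).
  { intros x Hx. apply in_between with t1 tau0; auto. apply (g_in _ _ _ _ _ G). lra. }
  split.
  - apply strict_dec with (fun t => -(V0f y t - V1f y n t)); auto.
    + intros; apply (A_der _ _ _ _ _ G); auto.
    + intros x Hx. pose proof (VV _ _ _ _ _ G x (HI x Hx) ltac:(lra)). lra.
  - apply strict_dec with (fun t => -(V0f y t + V1f y n t)); auto.
    + intros; apply (B_der _ _ _ _ _ G); auto.
    + intros x Hx. pose proof (VV _ _ _ _ _ G x (HI x Hx) ltac:(lra)). lra.
Qed.

Lemma AB_tau0 y tau0 n : Af y tau0 n tau0 = 0 /\ Bf y tau0 n tau0 = 0.
Proof. unfold Af, Bf, Tf, Xf, sdot, vsub. split; ring. Qed.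

Lemma AB_pos y tmin tmax tau0 n (G : good y tmin tmax tau0 n) t :
  in_interval tmin tmax t -> t < tau0 -> 0 < Af y tau0 n t /\ 0 < Bf y tau0 n t.
Proof.
  intros Ht Hlt. destruct (AB_dec _ _ _ _ _ G t tau0 Ht Hlt (Rle_refl _)).
  destruct (AB_tau0 y tau0 n). lra.
Qed.

Lemma Q_dec y tmin tmax tau0 n (G : good y tmin tmax tau0 n) t1 t2 :
  in_interval tmin tmax t1 -> t1 < t2 -> t2 <= tau0 -> Qf y tau0 n t2 < Qf y tau0 n t1.
Proof.
  intros H1 H12 H2. destruct (AB_dec _ _ _ _ _ G t1 t2 H1 H12 H2).
  assert (Hi2 : in_interval tmin tmax t2) by (apply in_between with t1 tau0; auto; [apply (g_in _ _ _ _ _ G)| lra]).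
  assert (0 <= Af y tau0 n t2 /\ 0 <= Bf y tau0 n t2).
  { destruct (Req_dec t2 tau0) as [->|Hne].
    - destruct (AB_tau0 y tau0 n). lra.
    - destruct (AB_pos _ _ _ _ _ G t2 Hi2 ltac:(lra)). lra. }
  unfold Qf. nra.
Qed.

Lemma Q_cpt y tmin tmax tau0 n (G : good y tmin tmax tau0 n) t :
  in_interval tmin tmax t -> continuity_pt (Qf y tau0 n) t.
Proof.
  intro Ht. apply cpt_of_exd. unfold Qf. 
  apply ex_derive_mult; eexists; [apply (A_der _ _ _ _ _ G)| apply (B_der _ _ _ _ _ G)]; eauto.
Qed.

Lemma Dist_Q y tmin tmax tau0 n (G : good y tmin tmax tau0 n) t :
  in_interval tmin tmax t -> Dist (vsub (y tau0) (y t)) = sqrt (Qf y tau0 n t).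
Proof.
  intro Ht. unfold Dist. f_equal. unfold mink, vsub.
  rewrite (y_pl _ _ _ _ _ G t 1), (y_pl _ _ _ _ _ G t 2), (y_pl _ _ _ _ _ G t 3) by (auto; lia).
  pose proof (g_n _ _ _ _ _ G) as Hn.
  unfold Qf, Af, Bf. fold (Tf y tau0 t). set (X := Xf y tau0 n t). set (T := Tf y tau0 t).
  unfold Tf in T. fold T.
  assert (E : X * n 1%nat * (X * n 1%nat) + X * n 2%nat * (X * n 2%nat) + X * n 3%nat * (X * n 3%nat)
    = X * X * (n 1%nat * n 1%nat + n 2%nat * n 2%nat + n 3%nat * n 3%nat)) by ring.
  rewrite Hn in E. lra.
Qed.

Lemma limr_plus m (f g : R -> R) a b :
  filterlim f (at_right m) (locally a) -> filterlim g (at_right m) (locally b) ->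
  filterlim (fun t => f t + g t) (at_right m) (locally (a + b)).
Proof. apply lim_plus. apply at_right_proper_filter. Qed.
Lemma limr_scal m (f : R -> R) a k :
  filterlim f (at_right m) (locally a) -> filterlim (fun t => k * f t) (at_right m) (locally (k * a)).
Proof. apply lim_scal. apply at_right_proper_filter. Qed.
Lemma limr_const m (a : R) : filterlim (fun _ => a) (at_right m) (locally a).
Proof. apply lim_const. apply at_right_proper_filter. Qed.

Lemma mono_lim (f : R -> R) m t1 K : m < t1 ->
  (forall s u, m < s -> s <= u -> u <= t1 -> f u <= f s) ->
  (forall s, m < s <= t1 -> f s <= K) ->
  exists L, filterlim f (at_right m) (locally L).
Proof.
  intros Hm Hmono HK.
  set (E := fun r => exists s, m < s <= t1 /\ r = f s).
  destruct (completeness E) as [L [HL1 HL2]].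
  { exists K. intros r [s [Hs ->]]. apply HK; auto. }
  { exists (f t1). exists t1. split; [lra|reflexivity]. }
  exists L. intros P [eps HP]. simpl.
  assert (Hr : exists s0, m < s0 <= t1 /\ L - eps < f s0).
  { apply NNPP. intro Hn.
    assert (Hb : is_upper_bound E (L - eps)).
    { intros r [s [Hs ->]]. apply Rnot_lt_le. intro Hl. apply Hn. exists s. split; auto. }
    pose proof (HL2 _ Hb). destruct eps; simpl in *; lra. }
  destruct Hr as [s0 [Hs0 Hlt]].
  assert (Hd : 0 < s0 - m) by lra.
  exists (mkposreal _ Hd). intros s Hs Hms. apply HP.
  unfold ball in Hs; simpl in Hs. unfold AbsRing_ball, abs, minus, plus, opp in Hs; simpl in Hs.
  apply Rabs_def2 in Hs.
  unfold ball; simpl. unfold AbsRing_ball, abs, minus, plus, opp; simpl.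
  assert (f s <= L) by (apply HL1; exists s; split; [lra|reflexivity]).
  assert (f s0 <= f s) by (apply Hmono; lra).
  apply Rabs_def1; lra.
Qed.

Lemma t1_exists tmin tmax tau0 : in_interval tmin tmax tau0 ->
  exists t1, in_interval tmin tmax t1 /\ t1 < tau0 /\ (forall m, tmin = Finite m -> m < t1).
Proof.
  intros [H1 H2]. destruct tmin as [m| |]; simpl in H1; try contradiction.
  - exists ((m + tau0)/2). split; [|split].
    + apply in_between with ((m+tau0)/2) tau0; try lra.
      * split; simpl; [lra|]. destruct tmax; simpl in *; auto; lra.
      * split; auto.
    + lra.
    + intros m' Hm'. injection Hm' as ->. lra.
  - exists (tau0 - 1). split; [|split].
    + split; simpl; auto. destruct tmax; simpl in *; auto; lra.
    + lra.
    + discriminate.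
Qed.

Lemma Q_unbounded y tmin tmax tau0 n (G : good y tmin tmax tau0 n) K :
  exists t, in_interval tmin tmax t /\ t < tau0 /\ K < Qf y tau0 n t.
Proof.
  apply NNPP. intro Hn.
  assert (Hb : forall t, in_interval tmin tmax t -> t < tau0 -> Qf y tau0 n t <= K).
  { intros t Ht Hlt. apply Rnot_lt_le. intro. apply Hn. exists t. auto. }
  pose proof (g_in _ _ _ _ _ G) as Hin.
  destruct (t1_exists _ _ _ Hin) as [t1 [Ht1 [Ht1t Ht1m]]].
  destruct (AB_pos _ _ _ _ _ G t1 Ht1 Ht1t) as [Ha1 Hb1].
  set (a1 := Af y tau0 n t1) in *. set (b1 := Bf y tau0 n t1) in *.
  assert (Hle : forall t, in_interval tmin tmax t -> t <= t1 ->
     a1 <= Af y tau0 n t <= K / b1 /\ b1 <= Bf y tau0 n t <= K / a1).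
  { intros t Ht Htt.
    assert (a1 <= Af y tau0 n t /\ b1 <= Bf y tau0 n t).
    { destruct (Req_dec t t1) as [->|Hne]; [unfold a1, b1; lra|].
      destruct (AB_dec _ _ _ _ _ G t t1 Ht ltac:(lra) ltac:(lra)). unfold a1, b1; lra. }
    pose proof (Hb t Ht ltac:(lra)). unfold Qf in H0.
    split; split; try lra.
    - apply Rmult_le_reg_r with b1; auto. field_simplify; [|lra]. nra.
    - apply Rmult_le_reg_r with a1; auto. field_simplify; [|lra]. nra. }
  pose proof Hin as [H1 H2].
  destruct tmin as [m| |] eqn:Etmin; simpl in H1; try contradiction.
  -
    pose proof (Ht1m m eq_refl) as Hmt1.
    assert (HI : forall s, m < s <= t1 -> in_interval (Finite m) tmax s).
    { intros s Hs. apply in_between with ((m + s)/2) t1; auto; [|lra].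
      split; simpl; [lra|]. destruct tmax; simpl in *; try lra; auto. }
    destruct (mono_lim (Af y tau0 n) m t1 (K / b1) Hmt1) as [LA HLA].
    { intros s u Hs Hsu Hu. destruct (Req_dec s u) as [->|Hne]; [lra|].
      destruct (AB_dec _ _ _ _ _ G s u (HI s ltac:(lra)) ltac:(lra) ltac:(lra)). lra. }
    { intros s Hs. apply (Hle s (HI s Hs)); lra. }
    destruct (mono_lim (Bf y tau0 n) m t1 (K / a1) Hmt1) as [LB HLB].
    { intros s u Hs Hsu Hu. destruct (Req_dec s u) as [->|Hne]; [lra|].
      destruct (AB_dec _ _ _ _ _ G s u (HI s ltac:(lra)) ltac:(lra) ltac:(lra)). lra. }
    { intros s Hs. apply (Hle s (HI s Hs)); lra. }
    apply (g_inext _ _ _ _ _ G m eq_refl).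
    exists (fun a => match a with 0%nat => y tau0 0%nat - (LA + LB)/2 | k => y tau0 k - (LB - LA)/2 * n k end).
    assert (Hev : at_right m (fun s => in_interval (Finite m) tmax s)).
    { assert (Hd : 0 < t1 - m) by lra. exists (mkposreal _ Hd). intros s Hs Hms. apply HI.
      unfold ball in Hs; simpl in Hs. unfold AbsRing_ball, abs, minus, plus, opp in Hs; simpl in Hs.
      apply Rabs_def2 in Hs. lra. }
    intros a Ha. destruct a as [|a].
    + simpl. replace (y tau0 0%nat - (LA + LB)/2) with (y tau0 0%nat + (-1/2) * (LA + LB)) by field.
      eapply filterlim_ext_loc.
      2:{ apply limr_plus; [apply limr_const|].
          apply limr_scal. apply limr_plus; [exact HLA|exact HLB]. }
      simpl. generalize Hev. apply filter_imp. intros s Hs.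
      unfold Af, Bf, Tf. field.
    + assert (Hs : (1 <= S a <= 3)%nat) by lia.
      simpl. replace (y tau0 (S a) - (LB - LA)/2 * n (S a)) with (y tau0 (S a) + (- n (S a) / 2) * (LB + (-1) * LA)) by field.
      eapply filterlim_ext_loc.
      2:{ apply limr_plus; [apply (limr_const _ (y tau0 (S a)))|].
          apply (limr_scal _ (fun s => Bf y tau0 n s + (-1) * Af y tau0 n s) _ (- n (S a) / 2)).
          apply limr_plus; [exact HLB|].
          apply limr_scal; exact HLA. }
      generalize Hev. apply filter_imp. intros s Hs'. simpl.
      pose proof (y_pl _ _ _ _ _ G s (S a) Hs' Hs) as E.
      unfold Af, Bf. replace (y s (S a)) with (y tau0 (S a) - Xf y tau0 n s * n (S a)) by lra.
      simpl. field.
  -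
    set (Kb := (K / b1 + K / a1) / 2).
    set (t := Rmin t1 (tau0 - Kb - 1)).
    assert (Ht : in_interval m_infty tmax t).
    { split; simpl; auto. destruct Ht1 as [_ Ht1]. destruct tmax; simpl in *; auto.
      pose proof (Rmin_l t1 (tau0 - Kb - 1)). unfold t; lra. }
    assert (Htt1 : t <= t1) by apply Rmin_l.
    destruct (Hle t Ht Htt1) as [HA HB].
    assert (HT : Tf y tau0 t <= Kb).
    { unfold Kb. replace (Tf y tau0 t) with ((Af y tau0 n t + Bf y tau0 n t)/2) by (unfold Af, Bf; field). lra. }
    assert (HT2 : tau0 - t <= Tf y tau0 t).
    { destruct (MVT_gen (Tf y tau0) t tau0 (fun s => - V0f y s)) as [c [Hc E]].
      - intros x Hx. rewrite Rmin_left in Hx by lra. rewrite Rmax_right in Hx by lra.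
        apply (T_der _ _ _ _ _ G). apply in_between with t tau0; auto; lra.
      - intros x Hx. rewrite Rmin_left in Hx by lra. rewrite Rmax_right in Hx by lra.
        apply cpt_of_der with (- V0f y x). apply (T_der _ _ _ _ _ G). apply in_between with t tau0; auto; lra.
      - rewrite Rmin_left in Hc by lra. rewrite Rmax_right in Hc by lra.
        assert (Hci : in_interval m_infty tmax c) by (apply in_between with t tau0; auto; lra).
        pose proof (mink_V _ _ _ _ _ G c Hci). pose proof (V0_pos _ _ _ _ _ G c Hci ltac:(lra)).
        assert (1 <= V0f y c) by nra.
        assert (HT0 : Tf y tau0 tau0 = 0) by (unfold Tf; ring).
        rewrite HT0 in E. nra. }
    assert (t <= tau0 - Kb - 1) by apply Rmin_r.
    lra.
Qed.

Lemma Q_pos y tmin tmax tau0 n (G : good y tmin tmax tau0 n) t :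
  in_interval tmin tmax t -> t < tau0 -> 0 < Qf y tau0 n t.
Proof. intros. destruct (AB_pos _ _ _ _ _ G t); auto. unfold Qf. nra. Qed.

Lemma Q_tau0 y tau0 n : Qf y tau0 n tau0 = 0.
Proof. unfold Qf. destruct (AB_tau0 y tau0 n) as [-> _]. ring. Qed.

Lemma lt_tmax tmin tmax (t tau0 : R) : in_interval tmin tmax tau0 -> Rbar_lt tmin t -> t < tau0 -> in_interval tmin tmax t.
Proof. intros [H1 H2] H3 H4. split; auto. destruct tmax; simpl in *; try lra; auto. Qed.

Lemma varpi_spec y tmin tmax tau0 n (G : good y tmin tmax tau0 n) z : 0 < z ->
  in_interval tmin tmax (varpi y tmin tau0 z) /\ varpi y tmin tau0 z < tau0 /\
  Qf y tau0 n (varpi y tmin tau0 z) = z^2.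
Proof.
  intro Hz. pose proof (g_in _ _ _ _ _ G) as Hin.
  set (P := fun tau => Rbar_lt tmin (Finite tau) /\ tau < tau0 /\ Dist (vsub (y tau0) (y tau)) = z).
  assert (Hex : exists tau, P tau).
  { destruct (Q_unbounded _ _ _ _ _ G (z^2)) as [t2 [Ht2 [Ht2l HQ]]].
    destruct (Ranalysis5.IVT_interv (fun s => z^2 - Qf y tau0 n s) t2 tau0) as [w [Hw Hw0]].
    - intros a Ha. apply continuity_pt_minus; [apply continuity_pt_const; intros u v; reflexivity|].
      apply (Q_cpt _ _ _ _ _ G). apply in_between with t2 tau0; auto.
    - exact Ht2l.
    - lra.
    - rewrite Q_tau0. nra.
    - assert (Hwne : w <> tau0) by (intro; subst w; rewrite Q_tau0 in Hw0; nra).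
      assert (Hwi : in_interval tmin tmax w) by (apply in_between with t2 tau0; auto).
      exists w. split; [apply Hwi|]. split; [lra|].
      rewrite (Dist_Q _ _ _ _ _ G w Hwi). replace (Qf y tau0 n w) with (z^2) by lra.
      rewrite sqrt_pow2; lra. }
  pose proof (epsilon_spec (inhabits 0) P Hex) as HP.
  change (epsilon (inhabits 0) P) with (varpi y tmin tau0 z) in HP.
  destruct HP as [H1 [H2 H3]].
  assert (Hi : in_interval tmin tmax (varpi y tmin tau0 z)) by (apply lt_tmax with tau0; auto).
  split; [exact Hi|]. split; [exact H2|].
  rewrite (Dist_Q _ _ _ _ _ G _ Hi) in H3.
  pose proof (Q_pos _ _ _ _ _ G _ Hi H2).
  assert (E : Qf y tau0 n (varpi y tmin tau0 z) = sqrt (Qf y tau0 n (varpi y tmin tau0 z)) * sqrt (Qf y tau0 n (varpi y tmin tau0 z))) by (rewrite sqrt_sqrt; lra).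
  rewrite H3 in E. rewrite E. simpl. ring.
Qed.

Lemma Q_le y tmin tmax tau0 n (G : good y tmin tmax tau0 n) t1 t2 :
  in_interval tmin tmax t1 -> t1 <= t2 -> t2 <= tau0 -> Qf y tau0 n t2 <= Qf y tau0 n t1.
Proof.
  intros. destruct (Req_dec t1 t2) as [->|]; [lra|].
  left. apply (Q_dec _ _ _ _ _ G); auto. lra.
Qed.

Lemma varpi_cont y tmin tmax tau0 n (G : good y tmin tmax tau0 n) z0 : 0 < z0 ->
  continuity_pt (fun z => varpi y tmin tau0 z) z0.
Proof.
  intro Hz0. pose proof (g_in _ _ _ _ _ G) as Hin.
  destruct (varpi_spec _ _ _ _ _ G z0 Hz0) as [Hs1 [Hs2 Hs3]].
  set (ts := varpi y tmin tau0 z0) in *.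
  unfold continuity_pt, continue_in, limit1_in, limit_in. simpl. unfold R_dist.
  intros eps Heps.
  assert (Ht1 : exists t1, in_interval tmin tmax t1 /\ t1 < ts /\ ts - t1 <= eps / 2).
  { destruct Hs1 as [Hm Hmx]. destruct tmin as [m| |]; simpl in Hm; try contradiction.
    - exists (Rmax (ts - eps/2) ((m + ts)/2)). 
      assert (ts - eps/2 <= Rmax (ts - eps / 2) ((m + ts) / 2)) by apply Rmax_l.
      assert ((m + ts)/2 <= Rmax (ts - eps / 2) ((m + ts) / 2)) by apply Rmax_r.
      assert (Rmax (ts - eps / 2) ((m + ts) / 2) < ts) by (apply Rmax_lub_lt; lra).
      split; [|split; lra].
      apply lt_tmax with tau0; auto. simpl. lra. lra.
    - exists (ts - eps/2). split; [|split; lra]. apply lt_tmax with tau0; auto. simpl; auto. lra. }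
  destruct Ht1 as [t1 [Ht1 [Ht1a Ht1b]]].
  set (t2 := Rmin (ts + eps/2) ((ts + tau0)/2)).
  assert (t2 <= ts + eps/2) by apply Rmin_l.
  assert (t2 <= (ts + tau0)/2) by apply Rmin_r.
  assert (Ht2a : ts < t2) by (apply Rmin_glb_lt; lra).
  assert (Ht2i : in_interval tmin tmax t2) by (apply in_between with ts tau0; auto; lra).
  assert (Q1 : z0^2 < Qf y tau0 n t1) by (rewrite <- Hs3; apply (Q_dec _ _ _ _ _ G); auto; lra).
  assert (Q2 : Qf y tau0 n t2 < z0^2) by (rewrite <- Hs3; apply (Q_dec _ _ _ _ _ G); auto; lra).
  assert (Q2p : 0 < Qf y tau0 n t2) by (apply (Q_pos _ _ _ _ _ G); auto; lra).
  assert (S1 : z0 < sqrt (Qf y tau0 n t1)).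
  { rewrite <- (sqrt_pow2 z0) by lra. apply sqrt_lt_1_alt. split; [nra| exact Q1]. }
  assert (S2 : sqrt (Qf y tau0 n t2) < z0).
  { rewrite <- (sqrt_pow2 z0) by lra. apply sqrt_lt_1_alt. split; [lra| exact Q2]. }
  assert (S2p : 0 <= sqrt (Qf y tau0 n t2)) by apply sqrt_pos.
  exists (Rmin (sqrt (Qf y tau0 n t1) - z0) (z0 - sqrt (Qf y tau0 n t2))).
  split. { apply Rmin_pos; lra. }
  intros z [_ Hz].
  pose proof (Rmin_l (sqrt (Qf y tau0 n t1) - z0) (z0 - sqrt (Qf y tau0 n t2))).
  pose proof (Rmin_r (sqrt (Qf y tau0 n t1) - z0) (z0 - sqrt (Qf y tau0 n t2))).
  apply Rabs_def2 in Hz.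
  assert (Hzp : 0 < z) by lra.
  assert (Z1 : z^2 < Qf y tau0 n t1).
  { pose proof (sqrt_sqrt (Qf y tau0 n t1) ltac:(lra)). assert (z < sqrt (Qf y tau0 n t1)) by lra. nra. }
  assert (Z2 : Qf y tau0 n t2 < z^2).
  { pose proof (sqrt_sqrt (Qf y tau0 n t2) ltac:(lra)). assert (sqrt (Qf y tau0 n t2) < z) by lra. nra. }
  destruct (varpi_spec _ _ _ _ _ G z Hzp) as [Hv1 [Hv2 Hv3]].
  set (v := varpi y tmin tau0 z) in *.
  assert (t1 < v).
  { apply Rnot_le_lt. intro Hle. pose proof (Q_le _ _ _ _ _ G v t1 Hv1 Hle ltac:(lra)). lra. }
  assert (v < t2).
  { apply Rnot_le_lt. intro Hle. pose proof (Q_le _ _ _ _ _ G t2 v Ht2i Hle ltac:(lra)). lra. }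
  change (varpi y tmin tau0 z0) with ts. apply Rabs_def1; lra.
Qed.

Lemma acosh_cs y : 1 <= y -> cosh (acosh y) = y /\ sinh (acosh y) = sqrt (y*y - 1).
Proof.
  intro Hy. set (s := sqrt (y*y - 1)).
  assert (Hs : 0 <= s) by apply sqrt_pos.
  assert (Hss : s * s = y*y - 1) by (apply sqrt_sqrt; nra).
  assert (Hp : 0 < y + s) by lra.
  assert (E1 : exp (acosh y) = y + s) by (unfold acosh; apply exp_ln; exact Hp).
  assert (E2 : exp (- acosh y) = y - s).
  { rewrite exp_Ropp, E1. field_simplify_eq; [|lra]. nra. }
  unfold cosh, sinh. rewrite E1, E2. split; field.
Qed.

Lemma tanh_dir (D : V4) z s : 0 < z -> 0 < D 0%nat ->
  D 0%nat * D 0%nat - (D 1%nat * D 1%nat + D 2%nat * D 2%nat + D 3%nat * D 3%nat) = z * z ->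
  (1 <= s <= 3)%nat ->
  tanh (acosh (D 0%nat / z)) * ((if Req_EM_T (sinh (acosh (D 0%nat / z))) 0 then e1
      else fun a => D a / (z * sinh (acosh (D 0%nat / z)))) s) = D s / D 0%nat.
Proof.
  intros Hz HD HS Hs.
  assert (Hy : 1 <= D 0%nat / z).
  { apply Rmult_le_reg_r with z; auto. field_simplify; [|lra].
    assert (z * z <= D 0%nat * D 0%nat) by nra. nra. }
  destruct (acosh_cs _ Hy) as [Ec Es].
  assert (Hsq : D s * D s <= D 1%nat * D 1%nat + D 2%nat * D 2%nat + D 3%nat * D 3%nat).
  { destruct s as [|[|[|[|]]]]; try lia; nra. }
  unfold tanh. destruct (Req_EM_T _ 0) as [H0|H0].
  - rewrite H0. rewrite Es in H0. apply sqrt_eq_0 in H0.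
    2:{ nra. }
    assert (Hz2 : D 0%nat / z * (D 0%nat / z) = (D 0%nat * D 0%nat) / (z * z)) by (field; lra).
    rewrite Hz2 in H0.
    assert (D 0%nat * D 0%nat = z * z).
    { apply Rmult_eq_reg_r with (/ (z*z)). 2: apply Rinv_neq_0_compat; nra.
      rewrite Rinv_r by nra. lra. }
    assert (D s * D s <= 0) by lra.
    assert (D s = 0) by nra. rewrite H2. field. split; lra.
  - rewrite Ec. field. repeat split; lra.
Qed.

Lemma tanh_dir1 (D : V4) s : 0 < D 0%nat ->
  D 0%nat * D 0%nat - (D 1%nat * D 1%nat + D 2%nat * D 2%nat + D 3%nat * D 3%nat) = 1 ->
  (1 <= s <= 3)%nat ->
  tanh (acosh (D 0%nat)) * ((if Req_EM_T (sinh (acosh (D 0%nat))) 0 then e1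
      else fun a => D a / sinh (acosh (D 0%nat))) s) = D s / D 0%nat.
Proof.
  intros HD HS Hs.
  pose proof (tanh_dir D 1 s ltac:(lra) HD ltac:(lra) Hs) as H.
  replace (D 0%nat / 1) with (D 0%nat) in H by field.
  rewrite <- H. destruct (Req_EM_T _ 0); [reflexivity|].
  f_equal. f_equal. ring.
Qed.

Definition Rf y tau0 n t :=
  (Xf y tau0 n t * V0f y t - V1f y n t * Tf y tau0 t) / (Tf y tau0 t * V0f y t - Xf y tau0 n t * V1f y n t).

Lemma Rf_facts y tmin tmax tau0 n (G : good y tmin tmax tau0 n) t :
  in_interval tmin tmax t -> t < tau0 ->
  0 < Tf y tau0 t * V0f y t - Xf y tau0 n t * V1f y n t /\ Rabs (Rf y tau0 n t) <= 1.
Proof.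
  intros Ht Hlt.
  destruct (AB_pos _ _ _ _ _ G t Ht Hlt) as [HA HB].
  destruct (VV _ _ _ _ _ G t Ht ltac:(lra)) as [V1 V2].
  unfold Af, Bf in *.
  set (T := Tf y tau0 t) in *. set (X := Xf y tau0 n t) in *.
  set (a := V0f y t) in *. set (b := V1f y n t) in *.
  assert (Hden : 0 < T * a - X * b).
  { replace (T * a - X * b) with (((T - X) * (a + b) + (T + X) * (a - b)) / 2) by field.
    assert (0 < (T - X) * (a + b)) by (apply Rmult_lt_0_compat; lra).
    assert (0 < (T + X) * (a - b)) by (apply Rmult_lt_0_compat; lra). lra. }
  split; auto.
  unfold Rf. fold T X a b.
  assert (0 < (T - X) * (a + b)) by (apply Rmult_lt_0_compat; lra).
  assert (0 < (T + X) * (a - b)) by (apply Rmult_lt_0_compat; lra).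
  apply Rabs_le. split.
  - apply Rmult_le_reg_r with (T * a - X * b); auto. field_simplify; [|lra]. nra.
  - apply Rmult_le_reg_r with (T * a - X * b); auto. field_simplify; [|lra]. nra.
Qed.

Lemma integrand_eq l y tmin tmax tau0 n (G : good y tmin tmax tau0 n) sigma z :
  (1 <= sigma <= 3)%nat -> 0 < z ->
  integrand l y tmin tau0 sigma z = n sigma * Rf y tau0 n (varpi y tmin tau0 z) * (J2 (z / l) / z).
Proof.
  intros Hs Hz.
  destruct (varpi_spec _ _ _ _ _ G z Hz) as [Hi [Hlt HQ]].
  set (t := varpi y tmin tau0 z) in *.
  pose proof (g_n _ _ _ _ _ G) as Hn.
  destruct (Rf_facts _ _ _ _ _ G t Hi Hlt) as [Hden _].
  destruct (AB_pos _ _ _ _ _ G t Hi Hlt) as [HA HB].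
  assert (HT : 0 < Tf y tau0 t) by (unfold Af, Bf in *; lra).
  assert (HV : 0 < V0f y t) by (apply (V0_pos _ _ _ _ _ G); auto; lra).
  set (D := vsub (y tau0) (y t)).
  assert (HD : forall k, (1 <= k <= 3)%nat -> D k = Xf y tau0 n t * n k).
  { intros k Hk. unfold D, vsub. apply (y_pl _ _ _ _ _ G); auto. }
  assert (HV' : forall k, (1 <= k <= 3)%nat -> vel y t k = V1f y n t * n k).
  { intros k Hk. apply (vel_pl _ _ _ _ _ G); auto. }
  assert (HD0 : D 0%nat = Tf y tau0 t) by reflexivity.
  assert (HSD : D 0%nat * D 0%nat - (D 1%nat * D 1%nat + D 2%nat * D 2%nat + D 3%nat * D 3%nat) = z * z).
  { rewrite (HD 1%nat), (HD 2%nat), (HD 3%nat) by lia. rewrite HD0. unfold Qf, Af, Bf in HQ.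
    set (X := Xf y tau0 n t) in *. set (T := Tf y tau0 t) in *.
    assert (E : X * n 1%nat * (X * n 1%nat) + X * n 2%nat * (X * n 2%nat) + X * n 3%nat * (X * n 3%nat)
       = X * X * (n 1%nat * n 1%nat + n 2%nat * n 2%nat + n 3%nat * n 3%nat)) by ring.
    rewrite Hn in E. simpl in HQ. nra. }
  assert (HSV : vel y t 0%nat * vel y t 0%nat - (vel y t 1%nat * vel y t 1%nat + vel y t 2%nat * vel y t 2%nat + vel y t 3%nat * vel y t 3%nat) = 1).
  { rewrite (HV' 1%nat), (HV' 2%nat), (HV' 3%nat) by lia. pose proof (mink_V _ _ _ _ _ G t Hi). unfold V0f in *.
    set (w := V1f y n t) in *.
    assert (E : w * n 1%nat * (w * n 1%nat) + w * n 2%nat * (w * n 2%nat) + w * n 3%nat * (w * n 3%nat)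
       = w * w * (n 1%nat * n 1%nat + n 2%nat * n 2%nat + n 3%nat * n 3%nat)) by ring.
    rewrite Hn in E. lra. }
  assert (Tmu : forall k, (1 <= k <= 3)%nat -> tanh (psi_ y tmin tau0 z) * mu_ y tmin tau0 z k = D k / D 0%nat).
  { intros k Hk. unfold mu_, psi_. fold t. fold D. cbv zeta.
    apply tanh_dir; auto. }
  assert (Tnu : forall k, (1 <= k <= 3)%nat -> tanh (chi_ y tmin tau0 z) * nu_ y tmin tau0 z k = vel y t k / vel y t 0%nat).
  { intros k Hk. unfold nu_, chi_. fold t. cbv zeta.
    apply (tanh_dir1 (vel y t)); auto. }
  unfold integrand, Delta_.
  replace (tanh (psi_ y tmin tau0 z) * tanh (chi_ y tmin tau0 z) * sdot (mu_ y tmin tau0 z) (nu_ y tmin tau0 z))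
    with ((tanh (psi_ y tmin tau0 z) * mu_ y tmin tau0 z 1%nat) * (tanh (chi_ y tmin tau0 z) * nu_ y tmin tau0 z 1%nat)
        + (tanh (psi_ y tmin tau0 z) * mu_ y tmin tau0 z 2%nat) * (tanh (chi_ y tmin tau0 z) * nu_ y tmin tau0 z 2%nat)
        + (tanh (psi_ y tmin tau0 z) * mu_ y tmin tau0 z 3%nat) * (tanh (chi_ y tmin tau0 z) * nu_ y tmin tau0 z 3%nat))
    by (unfold sdot; ring).
  rewrite (Tmu sigma Hs), (Tnu sigma Hs), !Tmu, !Tnu by lia.
  rewrite (HD sigma), (HD 1%nat), (HD 2%nat), (HD 3%nat), (HV' sigma), (HV' 1%nat), (HV' 2%nat), (HV' 3%nat), HD0 by lia.
  fold (V0f y t).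
  unfold Rf.
  set (X := Xf y tau0 n t) in *. set (T := Tf y tau0 t) in *.
  set (a := V0f y t) in *. set (b := V1f y n t) in *.
  assert (E : X * n 1%nat / T * (b * n 1%nat / a) + X * n 2%nat / T * (b * n 2%nat / a) +
     X * n 3%nat / T * (b * n 3%nat / a) = X * b * (n 1%nat * n 1%nat + n 2%nat * n 2%nat + n 3%nat * n 3%nat) / (T * a))
     by (field; lra).
  rewrite E, Hn. field. repeat split; lra.
Qed.

Lemma cpt_plus (f g : R -> R) x : continuity_pt f x -> continuity_pt g x -> continuity_pt (fun t => f t + g t) x.
Proof. intros. apply (continuity_pt_plus f g x); auto. Qed.
Lemma cpt_minus (f g : R -> R) x : continuity_pt f x -> continuity_pt g x -> continuity_pt (fun t => f t - g t) x.
Proof. intros. apply (continuity_pt_minus f g x); auto. Qed.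
Lemma cpt_const (c x : R) : continuity_pt (fun _ => c) x.
Proof. apply continuity_pt_const. intros u v; reflexivity. Qed.
Lemma cpt_id x : continuity_pt (fun t => t) x.
Proof. apply continuity_pt_id. Qed.

Lemma Rf_cpt y tmin tmax tau0 n (G : good y tmin tmax tau0 n) t :
  in_interval tmin tmax t -> t < tau0 -> continuity_pt (Rf y tau0 n) t.
Proof.
  intros Ht Hlt.
  assert (CT : continuity_pt (Tf y tau0) t) by (apply cpt_of_der with (- V0f y t); apply (T_der _ _ _ _ _ G); auto).
  assert (CX : continuity_pt (Xf y tau0 n) t).
  { apply continuity_pt_ext with (fun s => (Bf y tau0 n s - Af y tau0 n s) / 2).
    { intro s. unfold Af, Bf. field. }
    apply cpt_div; [| apply cpt_const | lra].
    apply cpt_minus; [apply cpt_of_der with (-(V0f y t + V1f y n t)); apply (B_der _ _ _ _ _ G); auto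
                     | apply cpt_of_der with (-(V0f y t - V1f y n t)); apply (A_der _ _ _ _ _ G); auto]. }
  assert (CV0 : continuity_pt (V0f y) t) by (apply (V0_cpt _ _ _ _ _ G); auto).
  assert (CV1 : continuity_pt (V1f y n) t).
  { unfold V1f, sdot.
    assert (C : forall k, (k < 4)%nat -> continuity_pt (fun s => vel y s k * n k) t).
    { intros k Hk. apply cpt_mult; [apply (g_vc _ _ _ _ _ G); auto | apply cpt_const]. }
    apply cpt_plus; [apply cpt_plus|]; [apply (C 1%nat)| apply (C 2%nat) | apply (C 3%nat)]; lia. }
  destruct (Rf_facts _ _ _ _ _ G t Ht Hlt) as [Hden _].
  unfold Rf. apply cpt_div.
  - apply cpt_minus; apply cpt_mult; auto.
  - apply cpt_minus; apply cpt_mult; auto.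
  - lra.
Qed.

Theorem main_abs y tmin tmax tau0 n (G : good y tmin tmax tau0 n) l sigma :
  0 < l -> (1 <= sigma <= 3)%nat -> abs_conv_0_infty (integrand l y tmin tau0 sigma).
Proof.
  intros Hl Hs. unfold abs_conv_0_infty.
  set (Psi := fun z => n sigma * Rf y tau0 n (varpi y tmin tau0 z) * (J2 (z / l) / z)).
  assert (HPsi : forall z, 0 < z -> integrand l y tmin tau0 sigma z = Psi z).
  { intros z Hz. apply (integrand_eq l _ _ _ _ _ G); auto. }
  assert (Hn1 : Rabs (n sigma) <= 1).
  { pose proof (g_n _ _ _ _ _ G). apply Rabs_le.
    assert (n sigma * n sigma <= 1) by (destruct sigma as [|[|[|[|]]]]; try lia; nra). split; nra. }
  assert (Hc : forall x, 0 < x -> continuity_pt (fun z => Rabs (integrand l y tmin tau0 sigma z)) x).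
  { intros x Hx.
    apply continuity_pt_filterlim.
    change (continuous (fun z => Rabs (integrand l y tmin tau0 sigma z)) x).
    refine (continuous_ext_loc (fun z => Rabs (integrand l y tmin tau0 sigma z)) (fun z => Rabs (Psi z)) x _ _).
    { assert (Hx2 : 0 < x / 2) by lra. exists (mkposreal _ Hx2). intros z Hz.
      unfold ball in Hz; simpl in Hz. unfold AbsRing_ball, abs, minus, plus, opp in Hz; simpl in Hz.
      apply Rabs_def2 in Hz. rewrite HPsi; auto. lra. }
    apply continuity_pt_filterlim.
    apply cpt_comp with (f := Psi) (g := Rabs); [| apply cpt_abs].
    destruct (varpi_spec _ _ _ _ _ G x Hx) as [Hi [Hlt _]].
    unfold Psi. apply cpt_mult; [apply cpt_mult|].
    + apply cpt_const.
    + apply cpt_comp with (f := fun z => varpi y tmin tau0 z) (g := Rf y tau0 n).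
      * apply (varpi_cont _ _ _ _ _ G); auto.
      * apply (Rf_cpt _ _ _ _ _ G); auto.
    + apply cpt_div; [| apply cpt_id | lra].
      apply cpt_comp with (f := fun z => z / l) (g := J2); [| apply J2_cpt].
      apply cpt_div; [apply cpt_id | apply cpt_const | lra]. }
  apply improper_nonneg.
  - exact Hc.
  - intros. apply Rabs_pos.
  - destruct (h_bound l Hl) as [M HM]. exists M.
    intros a b Ha Hab. eapply Rle_trans; [| apply (HM a b Ha Hab)].
    apply RInt_le; auto.
    + apply exRInt_cpt; auto. intros x Hx.
      apply Hc. lra.
    + apply exRInt_cpt; auto. intros. apply hJ_cpt; lra.
    + intros x Hx. rewrite HPsi by lra. unfold Psi, hJ.
      destruct (varpi_spec _ _ _ _ _ G x ltac:(lra)) as [Hi [Hlt _]].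
      destruct (Rf_facts _ _ _ _ _ G _ Hi Hlt) as [_ HR].
      rewrite !Rabs_mult. unfold Rdiv. rewrite Rabs_mult, (Rabs_pos_eq (/ x)) by (left; apply Rinv_0_lt_compat; lra).
      assert (0 <= Rabs (J2 (x * / l)) * / x) by (apply Rmult_le_pos; [apply Rabs_pos| left; apply Rinv_0_lt_compat; lra]).
      pose proof (Rabs_pos (n sigma)). pose proof (Rabs_pos (Rf y tau0 n (varpi y tmin tau0 x))).
      replace (Rabs (J2 (x * / l)) * / x) with (1 * 1 * (Rabs (J2 (x * / l)) * / x)) at 2 by ring.
      rewrite Rmult_assoc. rewrite (Rmult_assoc 1 1).
      apply Rmult_le_compat; try nra.
Qed.

Definition etaf (i : nat) : R := if Nat.eqb i 0 then -1 else 1.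
Definition Minv (L : nat -> nat -> R) (i j : nat) : R := etaf i * L j i * etaf j.
Definition ev (i : nat) : V4 := fun a => if Nat.eqb a i then 1 else 0.

Definition colprod (L : nat -> nat -> R) i j :=
  - L 0%nat i * L 0%nat j + L 1%nat i * L 1%nat j + L 2%nat i * L 2%nat j + L 3%nat i * L 3%nat j.

Lemma col_rel L : (forall x y, mink (lapply L x) (lapply L y) = mink x y) ->
  forall b c, (b < 4)%nat -> (c < 4)%nat -> colprod L b c = mink (ev b) (ev c).
Proof.
  intros HL b c Hb Hc. rewrite <- HL.
  destruct b as [|[|[|[|]]]]; try lia; destruct c as [|[|[|[|]]]]; try lia;
    unfold colprod, mink, lapply, ev; simpl; ring.
Qed.

Lemma Minv_inv L : (forall x y, mink (lapply L x) (lapply L y) = mink x y) ->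
  forall x b, (b < 4)%nat -> lapply (Minv L) (lapply L x) b = x b.
Proof.
  intros HL x b Hb.
  assert (Hexp : lapply (Minv L) (lapply L x) b = etaf b * (x 0%nat * colprod L b 0%nat + x 1%nat * colprod L b 1%nat
      + x 2%nat * colprod L b 2%nat + x 3%nat * colprod L b 3%nat)).
  { unfold lapply, Minv, colprod, etaf. simpl. ring. }
  rewrite Hexp. rewrite !(col_rel L HL) by lia.
  destruct b as [|[|[|[|]]]]; try lia; unfold mink, ev, etaf; simpl; ring.
Qed.

Definition indep (U W : V4) := forall s t, (forall a, (a < 4)%nat -> s * U a + t * W a = 0) -> s = 0 /\ t = 0.
Definition dot4 (X Y : V4) := X 0%nat * Y 0%nat + X 1%nat * Y 1%nat + X 2%nat * Y 2%nat + X 3%nat * Y 3%nat.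
Definition gdet U W := dot4 U U * dot4 W W - dot4 U W * dot4 U W.

Lemma sq0 x : x ^ 2 <= 0 -> x = 0.
Proof. intro H. simpl in H. nra. Qed.

Lemma gram_pos U W : indep U W -> 0 < gdet U W.
Proof.
  intro HI.
  set (m := fun i j => U i * W j - U j * W i).
  assert (Lag : gdet U W = m 0%nat 1%nat ^ 2 + m 0%nat 2%nat ^ 2 + m 0%nat 3%nat ^ 2 + m 1%nat 2%nat ^ 2 + m 1%nat 3%nat ^ 2 + m 2%nat 3%nat ^ 2)
    by (unfold gdet, dot4, m; ring).
  apply Rnot_le_lt. intro Hle.
  assert (Z : forall i j, (i < 4)%nat -> (j < 4)%nat -> m i j = 0).
  { assert (H01 : m 0%nat 1%nat = 0) by (apply sq0; pose proof (pow2_ge_0 (m 0%nat 1%nat)); pose proof (pow2_ge_0 (m 0%nat 2%nat)); pose proof (pow2_ge_0 (m 0%nat 3%nat)); pose proof (pow2_ge_0 (m 1%nat 2%nat)); pose proof (pow2_ge_0 (m 1%nat 3%nat)); pose proof (pow2_ge_0 (m 2%nat 3%nat)); lra).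
    assert (H02 : m 0%nat 2%nat = 0) by (apply sq0; pose proof (pow2_ge_0 (m 0%nat 1%nat)); pose proof (pow2_ge_0 (m 0%nat 2%nat)); pose proof (pow2_ge_0 (m 0%nat 3%nat)); pose proof (pow2_ge_0 (m 1%nat 2%nat)); pose proof (pow2_ge_0 (m 1%nat 3%nat)); pose proof (pow2_ge_0 (m 2%nat 3%nat)); lra).
    assert (H03 : m 0%nat 3%nat = 0) by (apply sq0; pose proof (pow2_ge_0 (m 0%nat 1%nat)); pose proof (pow2_ge_0 (m 0%nat 2%nat)); pose proof (pow2_ge_0 (m 0%nat 3%nat)); pose proof (pow2_ge_0 (m 1%nat 2%nat)); pose proof (pow2_ge_0 (m 1%nat 3%nat)); pose proof (pow2_ge_0 (m 2%nat 3%nat)); lra).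
    assert (H12 : m 1%nat 2%nat = 0) by (apply sq0; pose proof (pow2_ge_0 (m 0%nat 1%nat)); pose proof (pow2_ge_0 (m 0%nat 2%nat)); pose proof (pow2_ge_0 (m 0%nat 3%nat)); pose proof (pow2_ge_0 (m 1%nat 2%nat)); pose proof (pow2_ge_0 (m 1%nat 3%nat)); pose proof (pow2_ge_0 (m 2%nat 3%nat)); lra).
    assert (H13 : m 1%nat 3%nat = 0) by (apply sq0; pose proof (pow2_ge_0 (m 0%nat 1%nat)); pose proof (pow2_ge_0 (m 0%nat 2%nat)); pose proof (pow2_ge_0 (m 0%nat 3%nat)); pose proof (pow2_ge_0 (m 1%nat 2%nat)); pose proof (pow2_ge_0 (m 1%nat 3%nat)); pose proof (pow2_ge_0 (m 2%nat 3%nat)); lra).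
    assert (H23 : m 2%nat 3%nat = 0) by (apply sq0; pose proof (pow2_ge_0 (m 0%nat 1%nat)); pose proof (pow2_ge_0 (m 0%nat 2%nat)); pose proof (pow2_ge_0 (m 0%nat 3%nat)); pose proof (pow2_ge_0 (m 1%nat 2%nat)); pose proof (pow2_ge_0 (m 1%nat 3%nat)); pose proof (pow2_ge_0 (m 2%nat 3%nat)); lra).
    assert (Hsym : forall i j, m j i = - m i j) by (intros; unfold m; ring).
    assert (Hdiag : forall i, m i i = 0) by (intros; unfold m; ring).
    intros i j Hi Hj.
    destruct i as [|[|[|[|]]]]; try lia; destruct j as [|[|[|[|]]]]; try lia;
      try apply Hdiag; auto; rewrite Hsym; try rewrite H01; try rewrite H02; try rewrite H03;
      try rewrite H12; try rewrite H13; try rewrite H23; ring. }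
  assert (Hc : forall a, - dot4 U W * U a + dot4 U U * W a = U 0%nat * m 0%nat a + U 1%nat * m 1%nat a + U 2%nat * m 2%nat a + U 3%nat * m 3%nat a)
    by (intros; unfold dot4, m; ring).
  destruct (HI (- dot4 U W) (dot4 U U)) as [_ HUU].
  { intros a Ha. rewrite Hc. rewrite !Z by lia. ring. }
  assert (HU : forall a, (a < 4)%nat -> U a = 0).
  { unfold dot4 in HUU.
    pose proof (pow2_ge_0 (U 0%nat)). pose proof (pow2_ge_0 (U 1%nat)). pose proof (pow2_ge_0 (U 2%nat)). pose proof (pow2_ge_0 (U 3%nat)).
    intros a Ha. destruct a as [|[|[|[|]]]]; try lia; apply sq0; simpl in *; nra. }
  destruct (HI 1 0) as [H10 _]. { intros a Ha. rewrite HU by auto. ring. }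
  lra.
Qed.

Definition ell1 U W (z : V4) := (dot4 z U * dot4 W W - dot4 z W * dot4 U W) / gdet U W.
Definition ell2 U W (z : V4) := (dot4 z W * dot4 U U - dot4 z U * dot4 U W) / gdet U W.

Lemma coords U W (z : V4) a0 b0 : 0 < gdet U W -> (forall a, (a < 4)%nat -> z a = a0 * U a + b0 * W a) ->
  ell1 U W z = a0 /\ ell2 U W z = b0.
Proof.
  intros Hd Hz.
  assert (E1 : dot4 z U = a0 * dot4 U U + b0 * dot4 U W) by (unfold dot4; rewrite !Hz by lia; ring).
  assert (E2 : dot4 z W = a0 * dot4 U W + b0 * dot4 W W) by (unfold dot4; rewrite !Hz by lia; ring).
  unfold ell1, ell2. rewrite E1, E2. unfold gdet in *. split; field; lra.
Qed.

Lemma dir_sdot (z n : V4) lam : n 1%nat * n 1%nat + n 2%nat * n 2%nat + n 3%nat * n 3%nat = 1 ->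
  (forall s, (1 <= s <= 3)%nat -> z s = lam * n s) ->
  forall s, (1 <= s <= 3)%nat -> z s = sdot z n * n s.
Proof.
  intros Hn Hz s Hs. unfold sdot. rewrite (Hz 1%nat), (Hz 2%nat), (Hz 3%nat), (Hz s) by lia.
  replace (lam * n 1%nat * n 1%nat + lam * n 2%nat * n 2%nat + lam * n 3%nat * n 3%nat)
    with (lam * (n 1%nat * n 1%nat + n 2%nat * n 2%nat + n 3%nat * n 3%nat)) by ring.
  rewrite Hn. ring.
Qed.

Lemma plane_n (y : R -> V4) tmin tmax tau0 (P U W : V4) :
  indep U W ->
  (forall tau, in_interval tmin tmax tau -> exists s t, forall a, (a < 4)%nat -> y tau a = P a + s * U a + t * W a) ->
  in_interval tmin tmax tau0 ->
  (forall t a, (a < 4)%nat -> in_interval tmin tmax t -> ex_derive (fun s => y s a) t) ->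
  (forall a, (a < 4)%nat -> vel y tau0 a = if Nat.eqb a 0 then 1 else 0) ->
  exists n : V4, n 1%nat * n 1%nat + n 2%nat * n 2%nat + n 3%nat * n 3%nat = 1 /\
    forall t s, in_interval tmin tmax t -> (1 <= s <= 3)%nat -> y t s = y tau0 s + sdot (vsub (y t) (y tau0)) n * n s.
Proof.
  intros HI Hpl Hin Hder Hvel.
  pose proof (gram_pos U W HI) as Hd.
  set (k1 := fun b => (U b * dot4 W W - W b * dot4 U W) / gdet U W).
  set (k2 := fun b => (W b * dot4 U U - U b * dot4 U W) / gdet U W).
  assert (Hl1 : forall z, ell1 U W z = k1 0%nat * z 0%nat + k1 1%nat * z 1%nat + k1 2%nat * z 2%nat + k1 3%nat * z 3%nat)
    by (intro; unfold ell1, k1, dot4; field; lra).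
  assert (Hl2 : forall z, ell2 U W z = k2 0%nat * z 0%nat + k2 1%nat * z 1%nat + k2 2%nat * z 2%nat + k2 3%nat * z 3%nat)
    by (intro; unfold ell2, k2, dot4; field; lra).
  assert (HD : forall t, in_interval tmin tmax t -> forall a, (a < 4)%nat ->
     vsub (y t) (y tau0) a = ell1 U W (vsub (y t) (y tau0)) * U a + ell2 U W (vsub (y t) (y tau0)) * W a).
  { intros t Ht.
    destruct (Hpl t Ht) as [s [s' Hs]]. destruct (Hpl tau0 Hin) as [r [r' Hr]].
    destruct (coords U W (vsub (y t) (y tau0)) (s - r) (s' - r') Hd) as [E1 E2].
    { intros a Ha. unfold vsub. rewrite Hs, Hr by auto. ring. }
    rewrite E1, E2. intros a Ha. unfold vsub. rewrite Hs, Hr by auto. ring. }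
  assert (HE : forall a, (a < 4)%nat -> k1 0%nat * U a + k2 0%nat * W a = if Nat.eqb a 0 then 1 else 0).
  { intros a Ha.
    set (c := fun b => k1 b * U a + k2 b * W a).
    assert (Hloc : locally tau0 (fun s => y s a =
       (y tau0 a - (c 0%nat * y tau0 0%nat + c 1%nat * y tau0 1%nat + c 2%nat * y tau0 2%nat + c 3%nat * y tau0 3%nat))
       + c 0%nat * y s 0%nat + c 1%nat * y s 1%nat + c 2%nat * y s 2%nat + c 3%nat * y s 3%nat)).
    { generalize (locally_in _ _ _ Hin). apply filter_imp. intros s Hs.
      pose proof (HD s Hs a Ha) as E. unfold vsub in E. rewrite Hl1, Hl2 in E. unfold vsub in E.
      unfold c. lra. }
    pose proof (Derive_ext_loc _ _ _ Hloc) as E.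
    rewrite (is_derive_unique _ _ _ (der_comb y tau0 c _ (fun b Hb => Hder tau0 b Hb Hin))) in E.
    rewrite <- (Hvel a Ha). symmetry. etransitivity; [apply E|]. rewrite !Hvel by lia. unfold c. simpl. ring. }
  set (A0 := k1 0%nat) in *. set (B0 := k2 0%nat) in *.
  set (m := if Req_EM_T A0 0 then U else W).
  assert (Hm : forall t, in_interval tmin tmax t -> exists kap, forall s, (1 <= s <= 3)%nat ->
     vsub (y t) (y tau0) s = kap * m s).
  { intros t Ht. set (al := ell1 U W (vsub (y t) (y tau0))). set (be := ell2 U W (vsub (y t) (y tau0))).
    unfold m. destruct (Req_EM_T A0 0) as [H0|H0].
    - exists al. intros s Hs. rewrite (HD t Ht s) by lia. fold al be.
      pose proof (HE 0%nat ltac:(lia)) as E0. simpl in E0. rewrite H0 in E0.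
      pose proof (HE s ltac:(lia)) as Es. rewrite H0 in Es.
      destruct s as [|s]; [lia|]. simpl in Es.
      assert (B0 <> 0) by (intro HB; rewrite HB in E0; lra).
      assert (W (S s) = 0) by (apply Rmult_eq_reg_l with B0; auto; lra).
      rewrite H1. ring.
    - exists (be - al * B0 / A0). intros s Hs. rewrite (HD t Ht s) by lia. fold al be.
      pose proof (HE s ltac:(lia)) as Es. destruct s as [|s]; [lia|]. simpl in Es.
      assert (U (S s) = - B0 / A0 * W (S s)) by (field_simplify_eq; [lra|auto]).
      rewrite H. field. auto. }
  set (nm := sqrt (m 1%nat * m 1%nat + m 2%nat * m 2%nat + m 3%nat * m 3%nat)).
  assert (HS : 0 <= m 1%nat * m 1%nat + m 2%nat * m 2%nat + m 3%nat * m 3%nat) by nra.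
  exists (if Req_EM_T nm 0 then e1 else fun a => m a / nm).
  assert (Hn : (if Req_EM_T nm 0 then e1 else fun a => m a / nm) 1%nat * (if Req_EM_T nm 0 then e1 else fun a => m a / nm) 1%nat +
    (if Req_EM_T nm 0 then e1 else fun a => m a / nm) 2%nat * (if Req_EM_T nm 0 then e1 else fun a => m a / nm) 2%nat +
    (if Req_EM_T nm 0 then e1 else fun a => m a / nm) 3%nat * (if Req_EM_T nm 0 then e1 else fun a => m a / nm) 3%nat = 1).
  { destruct (Req_EM_T nm 0) as [H0|H0].
    - unfold e1; simpl. ring.
    - pose proof (sqrt_sqrt _ HS) as E. fold nm in E. field_simplify_eq; auto. lra. }
  split; [exact Hn|].
  intros t s Ht Hs.
  assert (Hz : forall s, (1 <= s <= 3)%nat -> vsub (y t) (y tau0) s = sdot (vsub (y t) (y tau0)) (if Req_EM_T nm 0 then e1 else fun a => m a / nm) * (if Req_EM_T nm 0 then e1 else fun a => m a / nm) s).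
  { destruct (Hm t Ht) as [kap Hk].
    destruct (Req_EM_T nm 0) as [H0|H0].
    - apply dir_sdot with 0; [exact Hn|].
      intros s' Hs'. rewrite Hk by auto.
      apply sqrt_eq_0 in H0; [|exact HS].
      assert (m s' * m s' <= 0) by (destruct s' as [|[|[|[|]]]]; try lia; nra).
      assert (m s' = 0) by nra. rewrite H1. ring.
    - apply dir_sdot with (kap * nm); [exact Hn|].
      intros s' Hs'. rewrite Hk by auto. field. auto. }
  pose proof (Hz s Hs) as Hzs. unfold vsub in Hzs at 1. lra.
Qed.

Theorem proposition3 (l : R) (xi : R -> V4) (tmin tmax : Rbar) :
  0 < l ->
  worldline xi tmin tmax ->
  in_timelike_plane xi tmin tmax ->
  forall tau0 : R, in_interval tmin tmax tau0 ->
  forall L : nat -> nat -> R, orthochronous_lorentz L ->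
  (forall a, (a < 4)%nat ->
     vel (fun t => lapply L (xi t)) tau0 a = if Nat.eqb a 0 then 1 else 0) ->
  forall sigma : nat, (1 <= sigma <= 3)%nat ->
  abs_conv_0_infty
    (integrand l (fun t => lapply L (xi t)) tmin tau0 sigma).
Proof.
  intros Hl Hw Hpl tau0 Hin L HL Hvel sigma Hs.
  destruct Hw as [Hmin [Hmax [Hlt [Hsm [Hprop [Hfut [Hinm HinM]]]]]]].
  destruct HL as [HLm HL00].
  set (y := fun t => lapply L (xi t)) in *.
  assert (Hxd : forall t b, (b < 4)%nat -> in_interval tmin tmax t -> ex_derive (fun s => xi s b) t).
  { intros t b Hb Ht. exact (Hsm b 1%nat t Hb Ht). }
  assert (Hxd2 : forall t b, (b < 4)%nat -> in_interval tmin tmax t -> continuity_pt (fun s => vel xi s b) t).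
  { intros t b Hb Ht. apply cpt_of_exd. exact (Hsm b 2%nat t Hb Ht). }
  assert (Hyd : forall t a, (a < 4)%nat -> in_interval tmin tmax t ->
     is_derive (fun s => y s a) t (lapply L (vel xi t) a)).
  { intros t a Ha Ht.
    eapply is_derive_ext; [| exact (der_comb xi t (fun b => L a b) 0 (fun b Hb => Hxd t b Hb Ht))].
    intro s. unfold y, lapply. simpl. ring. }
  assert (Hvy : forall t a, (a < 4)%nat -> in_interval tmin tmax t -> vel y t a = lapply L (vel xi t) a).
  { intros t a Ha Ht. apply is_derive_unique. apply Hyd; auto. }
  destruct Hpl as [p [u [v [Hind [_ Hxi]]]]].
  set (U := lapply L u). set (W := lapply L v). set (P := lapply L p).
  assert (HUW : indep U W).
  { intros s t H. apply Hind. intros a Ha.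
    rewrite <- (Minv_inv L HLm (fun k => s * u k + t * v k) a Ha).
    assert (Hz : forall b, (b < 4)%nat -> lapply L (fun k => s * u k + t * v k) b = 0).
    { intros b Hb. rewrite <- (H b Hb). unfold U, W, lapply. ring. }
    unfold lapply at 1. rewrite !Hz by lia. ring. }
  destruct (plane_n y tmin tmax tau0 P U W HUW) as [n [Hn Hpln]].
  { intros tau Htau. destruct (Hxi tau Htau) as [s [t Hst]]. exists s, t. intros a Ha.
    unfold y, P, U, W, lapply. rewrite !Hst by lia. ring. }
  { exact Hin. }
  { intros t a Ha Ht. eexists. apply Hyd; auto. }
  { exact Hvel. }
  assert (G : good y tmin tmax tau0 n).
  { constructor.
    - exact Hin.
    - intros t a Ha Ht. eexists. apply Hyd; auto.
    - intros t a Ha Ht.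
      apply continuity_pt_filterlim.
      refine (continuous_ext_loc (fun s => vel y s a) (fun s => lapply L (vel xi s) a) t _ _).
      { generalize (locally_in _ _ _ Ht). apply filter_imp. intros s Hs'. symmetry. apply Hvy; auto. }
      apply continuity_pt_filterlim. unfold lapply.
      apply cpt_plus; [apply cpt_plus; [apply cpt_plus|]|]; apply cpt_mult; try apply cpt_const; apply Hxd2; auto; lia.
    - intros t Ht.
      assert (E : mink (vel y t) (vel y t) = mink (lapply L (vel xi t)) (lapply L (vel xi t))).
      { unfold mink. rewrite !Hvy by (auto; lia). reflexivity. }
      rewrite E, HLm. apply Hprop; auto.
    - exact Hvel.
    - exact Hn.
    - exact Hpln.
    - intros m Hm [q Hq]. apply (Hinm m Hm). exists (lapply (Minv L) q). intros b Hb.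
      eapply filterlim_ext.
      { intro s. exact (Minv_inv L HLm (xi s) b Hb). }
      unfold lapply at 2.
      apply limr_plus; [apply limr_plus; [apply limr_plus|]|]; apply limr_scal; apply (Hq _); lia. }
  apply (main_abs _ _ _ _ _ G); auto.
Qed.
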